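(* Assume the stiffness matrix $\mathbf A=(a_{\ell,k})_{\ell,k\ge2}$ of the operator $L$ belongs to $\mathcal D_e(\eta_L)$ for some $\eta_L>0$, and let $v\in\mathcal A_G^{\eta,t}$ for some $\eta>0$, $t\in(0,1]$. Suppose one of the following holds: (a) $\mathbf A$ is banded with $2p+1$ nonzero diagonals (i.e. $a_{\ell,k}=0$ whenever $|\ell-k|>p$); in this case set $\bar\eta=\eta/(2p+1)^t$, $\bar t=t$; (b) $\mathbf A$ is dense, but $\eta<\eta_L$; in this case set $\bar\eta=\zeta(t)\eta$, $\bar t=\frac{t}{1+t}$, where $\zeta(t):=\big(\frac{1+t}{2}\big)^{\frac{t}{1+t}}$ for $0<t\le1$. Then $Lv\in\mathcal A_G^{\bar\eta,\bar t}$ and $\|Lv\|_{\mathcal A_G^{\bar\eta,\bar t}}\le C\|v\|_{\mathcal A_G^{\eta,t}}$ with a constant $C$ independent of $v$.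
   Context: $I=(-1,1)$, $V=H^1_0(I)$, $L_k$ the Legendre polynomial of degree $k$ with $L_k(1)=1$, and $\eta_k=\frac{1}{\sqrt{4k-2}}(L_{k-2}-L_k)$, $k\in\mathbb N_2:=\{k\in\mathbb N:k\ge2\}$, the Babuška–Shen basis, orthonormal in $V$ for $(u,v)\mapsto\int_I u'v'$. Each $v\in V$ is $v=\sum_{k\ge2}\hat v_k\eta_k$ with $\|v\|:=\|v'\|_{L^2}=(\sum|\hat v_k|^2)^{1/2}$; each $f\in H^{-1}(I)$ has coefficients $\hat f_k=\langle f,\eta_k\rangle$ and $\|f\|:=(\sum_{k\ge2}|\hat f_k|^2)^{1/2}$. $L$ is the operator $Lw=-(\nu w')'+\sigma w$ with smooth real coefficients, $0<\nu_*\le\nu\le\nu^*$, $0\le\sigma\le\sigma^*$, associated with the bilinear form $a(w,v)=\int_I\nu w'v'+\int_I\sigma wv$ on $V$; its stiffness matrix is $a_{\ell,k}=a(\eta_k,\eta_\ell)$, so the coefficient vector of $Lv$ is $\mathbf A\mathbf v$. A matrix belongs to $\mathcal D_e(\eta_L)$ if there is $c_L>0$ with $|a_{m,n}|\le c_Le^{-\eta_L|m-n|}$ for all $m,n\ge2$. For a coefficient sequence (of a function in $V$ or a functional in $H^{-1}$), the best $N$-term approximation error is $E_N=\inf_{\Lambda\subset\mathbb N_2,|\Lambda|=N}(\sum_{k\notin\Lambda}|\hat v_k|^2)^{1/2}$, and $\mathcal A_G^{\eta,t}$ is the set of such $v$ with $\|v\|_{\mathcal A_G^{\eta,t}}:=\sup_{N\ge0}E_N(v)e^{\eta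 N^t}<\infty$. *)

(* Defs.v *)
From Stdlib Require Import Reals List.
From Coquelicot Require Import Coquelicot.
Open Scope R_scope.

(* Convention: sequences indexed by k in N_2 = {2,3,...} are stored shifted,
   i.e. a sequence c : nat -> R represents (c_k)_{k>=2} via c j = c_{j+2}.
   Index differences |m-n| are invariant under this shift. *)

(* Legendre polynomials: leg_pair n = (L_n, L_{n+1}), with L_0 = 1, L_1 = x,
   (k+1) L_{k+1} = (2k+1) x L_k - k L_{k-1}  (normalized by L_k(1) = 1). *)
Fixpoint leg_pair (n : nat) : (R -> R) * (R -> R) :=
  match n with
  | O => (fun _ => 1, fun x => x)
  | S m => let (p, q) := leg_pair m in
           (q, fun x => ((2 * INR m + 3) * x * q x - (INR m + 1) * p x) / (INR m + 2))
  end.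

Definition legendre (n : nat) : R -> R := fst (leg_pair n).

(* Babuska-Shen basis, shifted: bs j = eta_{j+2}
   = (L_j - L_{j+2}) / sqrt(4 (j+2) - 2). *)
Definition bs (j : nat) : R -> R :=
  fun x => (legendre j x - legendre (j + 2) x) / sqrt (4 * INR (j + 2) - 2).

(* Stiffness matrix (shifted): stiff nu sigma i j = a_{i+2, j+2}
   = a(eta_{j+2}, eta_{i+2}) = int_{-1}^1 nu eta_k' eta_l' + sigma eta_k eta_l. *)
Definition stiff (nu sigma : R -> R) (i j : nat) : R :=
  RInt (fun x => nu x * Derive (bs j) x * Derive (bs i) x
                 + sigma x * bs j x * bs i x) (-1) 1.

Definition smooth (f : R -> R) : Prop := forall (n : nat) (x : R), ex_derive_n f n x.

Definition in_De (etaL : R) (A : nat -> nat -> R) : Prop :=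
  exists cL : R, 0 < cL /\
    forall m n : nat, Rabs (A m n) <= cL * exp (- etaL * Rabs (INR m - INR n)).

Definition banded (p : nat) (A : nat -> nat -> R) : Prop :=
  forall m n : nat, INR p < Rabs (INR m - INR n) -> A m n = 0.

(* Coefficient vector of L v: (A v)_l = sum_k a_{l,k} v_k. *)
Definition apply_mat (A : nat -> nat -> R) (c : nat -> R) : nat -> R :=
  fun i => Series (fun j => A i j * c j).

(* Real power N^t with 0^t = 0 for t > 0. *)
Definition npow (N : nat) (t : R) : R :=
  match N with O => 0 | S _ => Rpower (INR N) t end.

Definition tail_sq (c : nat -> R) (Lam : list nat) : R :=
  Series (fun j => if existsb (Nat.eqb j) Lam then 0 else (c j) ^ 2).

Definition bestN (c : nat -> R) (N : nat) : Rbar :=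
  Glb_Rbar (fun r => exists Lam : list nat,
              NoDup Lam /\ length Lam = N /\ r = sqrt (tail_sq c Lam)).

Definition AG_norm (eta t : R) (c : nat -> R) : Rbar :=
  Lub_Rbar (fun r => exists N : nat, r = Rbar_mult (bestN c N) (exp (eta * npow N t))).

Definition in_AG (eta t : R) (c : nat -> R) : Prop :=
  ex_series (fun j => (c j) ^ 2) /\ is_finite (AG_norm eta t c).

Definition zeta (t : R) : R := Rpower ((1 + t) / 2) (t / (1 + t)).

(* Main.v *)
Require Import Defs.
From Stdlib Require Import Reals List Lra Lia Psatz ZArith.
From Coquelicot Require Import Coquelicot.
Open Scope R_scope.

Definition lsum (f : nat -> R) (l : list nat) : R :=
  fold_right (fun j acc => f j + acc) 0 l.

Lemma lsum_cons f a l : lsum f (a :: l) = f a + lsum f l.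
Proof. reflexivity. Qed.

Lemma lsum_nil f : lsum f nil = 0.
Proof. reflexivity. Qed.

Lemma lsum_app f l1 l2 : lsum f (l1 ++ l2) = lsum f l1 + lsum f l2.
Proof. induction l1; simpl; [lra|rewrite IHl1; lra]. Qed.

Lemma lsum_le f g l : (forall j, In j l -> f j <= g j) -> lsum f l <= lsum g l.
Proof. induction l; simpl; intros H; [lra|].
 assert (f a <= g a) by auto. assert (lsum f l <= lsum g l) by auto. lra. Qed.

Lemma lsum_nonneg f l : (forall j, In j l -> 0 <= f j) -> 0 <= lsum f l.
Proof. induction l; simpl; intros H; [lra|].
 assert (0 <= f a) by auto. assert (0 <= lsum f l) by auto. lra. Qed.

Lemma lsum_scal c f l : lsum (fun j => c * f j) l = c * lsum f l.
Proof. induction l; simpl; [ring| rewrite IHl; ring]. Qed.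

Lemma lsum_plus f g l : lsum (fun j => f j + g j) l = lsum f l + lsum g l.
Proof. induction l; simpl; [ring| rewrite IHl; ring]. Qed.

Lemma lsum_ext f g l : (forall j, In j l -> f j = g j) -> lsum f l = lsum g l.
Proof. induction l; simpl; intros H; auto. rewrite H, IHl; auto. Qed.

Lemma lsum_const c l : lsum (fun _ => c) l = c * INR (length l).
Proof. induction l; simpl length; [simpl; ring|]. rewrite S_INR. simpl. rewrite IHl. ring. Qed.

Lemma lsum_seq_S f n : lsum f (seq 0 (S n)) = lsum f (seq 0 n) + f n.
Proof. rewrite seq_S, lsum_app. simpl. ring. Qed.

Lemma sum_n_lsum f n : sum_n f n = lsum f (seq 0 (S n)).
Proof. induction n.
 - rewrite sum_O. simpl. unfold lsum; simpl. rewrite Rplus_0_r. reflexivity.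
 - rewrite sum_Sn, IHn, (lsum_seq_S f (S n)). reflexivity. Qed.

Lemma is_series_lim f l : is_series f l -> is_lim_seq (sum_n f) l.
Proof. intro H. exact H. Qed.

Lemma lim_is_series f l : is_lim_seq (sum_n f) (Finite l) -> is_series f l.
Proof. intro H. exact H. Qed.

Lemma series_bounded f B : (forall n, 0 <= f n) -> (forall n, lsum f (seq 0 n) <= B) ->
  ex_series f /\ Series f <= B.
Proof.
 intros Hp HB.
 assert (Hi : forall n, sum_n f n <= sum_n f (S n)).
 { intro n. rewrite sum_Sn. specialize (Hp (S n)). simpl. unfold plus; simpl. lra. }
 assert (Hb : forall n, sum_n f n <= B). { intro n. rewrite sum_n_lsum. auto. }
 destruct (ex_finite_lim_seq_incr _ _ Hi Hb) as [l Hl].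
 assert (Hs : is_series f l) by (apply lim_is_series; exact Hl).
 split. exists l; exact Hs.
 rewrite (is_series_unique _ _ Hs).
 assert (H := is_lim_seq_le _ (fun _ => B) l B Hb Hl (is_lim_seq_const B)). simpl in H. exact H.
Qed.

Lemma lsum_le_series f n : (forall n, 0 <= f n) -> ex_series f -> lsum f (seq 0 n) <= Series f.
Proof.
 intros Hp [l Hl]. rewrite (is_series_unique _ _ Hl).
 destruct n. simpl.
 - assert (Hi : forall n, sum_n f n <= sum_n f (S n)).
   { intro k. rewrite sum_Sn. specialize (Hp (S k)). simpl. unfold plus; simpl. lra. }
   pose proof (is_lim_seq_incr_compare _ _ (is_series_lim _ _ Hl) Hi 0). rewrite sum_O in H.
   specialize (Hp 0%nat). lra.
 - rewrite <- sum_n_lsum. apply is_lim_seq_incr_compare. apply is_series_lim; auto.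
   intro k. rewrite sum_Sn. specialize (Hp (S k)). simpl. unfold plus; simpl. lra.
Qed.

Lemma lsum_remove f a l : NoDup l -> In a l ->
  lsum f l = f a + lsum f (remove Nat.eq_dec a l).
Proof.
 induction l as [|b l IH]; intros Hnd Hin; [destruct Hin|].
 inversion Hnd; subst. simpl. destruct (Nat.eq_dec a b).
 - subst. rewrite notin_remove; auto.
 - simpl. destruct Hin as [->|Hin]; [congruence|]. rewrite (IH H2 Hin). ring.
Qed.

Lemma NoDup_remove_nat a l : NoDup l -> NoDup (remove Nat.eq_dec a l).
Proof.
 induction l as [|b l IH]; intros H; simpl; [constructor|]. inversion H; subst.
 destruct (Nat.eq_dec a b); auto. constructor; auto.
 intro Hin. apply in_remove in Hin. tauto.
Qed.

Lemma lsum_incl f l1 l2 : (forall j, 0 <= f j) -> NoDup l1 -> NoDup l2 -> incl l1 l2 ->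
  lsum f l1 <= lsum f l2.
Proof.
 intros Hp. revert l2. induction l1 as [|a l1 IH]; intros l2 H1 H2 Hi.
 - simpl. apply lsum_nonneg. auto.
 - inversion H1; subst. simpl.
   rewrite (lsum_remove f a l2 H2 (Hi a (or_introl eq_refl))).
   assert (lsum f l1 <= lsum f (remove Nat.eq_dec a l2)); [|lra].
   apply IH; auto. apply NoDup_remove_nat; auto.
   intros x Hx. apply in_in_remove. intro; subst; tauto. apply Hi. right; auto.
Qed.

Lemma incl_seq_max l : exists n, incl l (seq 0 n).
Proof.
 induction l as [|a l [n Hn]]. exists 0%nat. intros x [].
 exists (S (Nat.max a n)). intros x [->|Hx]; apply in_seq; split; try lia.
 apply Hn in Hx. apply in_seq in Hx. lia.
Qed.

Lemma lsum_le_series_nodup f l : (forall n, 0 <= f n) -> ex_series f -> NoDup l ->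
  lsum f l <= Series f.
Proof.
 intros Hp He Hnd. destruct (incl_seq_max l) as [n Hn].
 eapply Rle_trans. apply (lsum_incl f l (seq 0 n)); auto. apply seq_NoDup.
 apply lsum_le_series; auto.
Qed.

Lemma ex_series_le_R f g : (forall n, 0 <= f n <= g n) -> ex_series g -> ex_series f.
Proof.
 intros H Hg. apply (series_bounded f (Series g)). intro n; apply H.
 intro n. eapply Rle_trans. apply (lsum_le f g). intros; apply H.
 apply lsum_le_series; auto. intro k. destruct (H k); lra.
Qed.

Lemma cs_list (b z : nat -> R) l : (forall j, 0 <= b j) ->
  (lsum (fun j => b j * z j) l)^2 <= lsum b l * lsum (fun j => b j * z j ^ 2) l.
Proof.
 intros Hb. set (A := lsum b l). set (B := lsum (fun j => b j * z j) l).
 set (C := lsum (fun j => b j * z j ^ 2) l).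
 assert (Hq : forall lam, 0 <= C - 2 * lam * B + lam^2 * A).
 { intro lam.
   assert (E : C - 2 * lam * B + lam^2 * A = lsum (fun j => b j * (z j - lam)^2) l).
   { unfold A, B, C. clear A B C. induction l; rewrite ?lsum_nil, ?lsum_cons; [ring|]. rewrite <- IHl. ring. }
   rewrite E. apply lsum_nonneg. intros j _. apply Rmult_le_pos; [auto|apply pow2_ge_0]. }
 assert (HA : 0 <= A) by (apply lsum_nonneg; auto).
 destruct (Req_dec A 0) as [H0|H0].
 -
   assert (HB : B = 0).
   { destruct (Req_dec B 0); auto. exfalso.
     specialize (Hq ((C + 1) / (2 * B))). rewrite H0 in Hq.
     replace (C - 2 * ((C + 1) / (2 * B)) * B + ((C + 1) / (2 * B)) ^ 2 * 0) with (-1) in Hq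
       by (field; auto). lra. }
   rewrite HB, H0. nra.
 - specialize (Hq (B / A)).
   replace (C - 2 * (B / A) * B + (B / A) ^ 2 * A) with ((A * C - B^2) / A) in Hq by (field; auto).
   assert (0 <= A * C - B^2).
   { apply (Rmult_le_reg_r (/ A)). apply Rinv_0_lt_compat; lra. rewrite Rmult_0_l. exact Hq. }
   lra.
Qed.

Lemma is_series_zero : is_series (fun _ : nat => 0) 0.
Proof.
 apply lim_is_series. eapply is_lim_seq_ext. 2: apply is_lim_seq_const. intro n.
 rewrite sum_n_lsum. rewrite lsum_const. ring.
Qed.

Lemma lsum_series (F : nat -> nat -> R) l : (forall i, ex_series (F i)) ->
  ex_series (fun j => lsum (fun i => F i j) l) /\
  lsum (fun i => Series (F i)) l = Series (fun j => lsum (fun i => F i j) l).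
Proof.
 intros HF. induction l as [|a l [He Heq]].
 - rewrite lsum_nil. split. exists 0. apply is_series_zero.
   symmetry. apply is_series_unique. apply is_series_zero.
 - rewrite lsum_cons. split. apply (ex_series_plus (F a) _ (HF a) He).
   rewrite Heq. rewrite <- Series_plus; auto.
Qed.

Lemma sq_le_sqrt x W : 0 <= x -> x^2 <= W -> x <= sqrt W.
Proof. intros H1 H2. rewrite <- (sqrt_pow2 x H1). apply sqrt_le_1_alt. exact H2. Qed.

Lemma schur (b : nat -> nat -> R) (z : nat -> R) alpha beta :
  (forall i j, 0 <= b i j) -> (forall j, 0 <= z j) ->
  (forall i m, lsum (b i) (seq 0 m) <= alpha) ->
  (forall j n, lsum (fun i => b i j) (seq 0 n) <= beta) ->
  ex_series (fun j => z j ^ 2) ->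
  (forall i, ex_series (fun j => b i j * z j)) /\
  (forall n, lsum (fun i => (Series (fun j => b i j * z j))^2) (seq 0 n)
       <= alpha * beta * Series (fun j => z j ^ 2)).
Proof.
 intros Hb Hz Hr Hc Hs.
 set (Z := Series (fun j => z j ^ 2)).
 assert (Hz2 : forall j, 0 <= z j ^ 2) by (intro; apply pow2_ge_0).
 assert (HZ : 0 <= Z). { unfold Z. pose proof (lsum_le_series (fun j => z j ^2) 0 Hz2 Hs) as H. simpl in H. exact H. }
 assert (Hbα : forall i j, b i j <= alpha).
 { intros i j. pose proof (Hr i (S j)). rewrite lsum_seq_S in H.
   assert (0 <= lsum (b i) (seq 0 j)) by (apply lsum_nonneg; auto). lra. }
 assert (Hbz2 : forall i, ex_series (fun j => b i j * z j ^ 2)).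
 { intro i. apply (series_bounded _ (alpha * Z)). intro; pose proof (Hb i n); nra.
   intro n. eapply Rle_trans. apply (lsum_le _ (fun j => alpha * z j ^ 2)).
   intros j _. pose proof (Hb i j). pose proof (Hbα i j). nra.
   rewrite lsum_scal. pose proof (lsum_le_series (fun j => z j ^2) n Hz2 Hs).
   assert (0 <= alpha). { pose proof (Hbα i 0%nat). pose proof (Hb i 0%nat). lra. }
   fold Z in H. nra. }
 assert (Hpart : forall i m, (lsum (fun j => b i j * z j) (seq 0 m))^2 <=
                            alpha * Series (fun j => b i j * z j ^ 2)).
 { intros i m. eapply Rle_trans. apply cs_list. intro; auto.
   apply Rmult_le_compat. apply lsum_nonneg; auto. apply lsum_nonneg. intros; pose proof (Hb i j); nra.
   auto. apply lsum_le_series; auto. intro; pose proof (Hb i n); nra. }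
 assert (Hex : forall i, ex_series (fun j => b i j * z j) /\
     Series (fun j => b i j * z j) <= sqrt (alpha * Series (fun j => b i j * z j ^ 2))).
 { intro i. apply series_bounded. intro; pose proof (Hb i n); pose proof (Hz n); nra.
   intro m. apply sq_le_sqrt. apply lsum_nonneg. intros; pose proof (Hb i j); pose proof (Hz j); nra.
   auto. }
 split. intro i; apply Hex.
 intro n.
 assert (Hy : forall i, (Series (fun j => b i j * z j))^2 <= alpha * Series (fun j => b i j * z j ^ 2)).
 { intro i. destruct (Hex i) as [He Hle].
   assert (Hp0 : forall j, 0 <= b i j * z j).
   { intro j. apply Rmult_le_pos; auto. }
   assert (0 <= Series (fun j => b i j * z j)).
   { pose proof (lsum_le_series (fun j => b i j * z j) 0 Hp0 He) as H. exact H. }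
   assert (H0 : 0 <= alpha * Series (fun j => b i j * z j ^ 2)).
   { pose proof (Hpart i 0%nat) as H0. rewrite lsum_nil in H0. 
     eapply Rle_trans; [|exact H0]. apply pow2_ge_0. }
   pose proof (pow2_sqrt _ H0). 
   assert (Series (fun j => b i j * z j) ^ 2 <= sqrt (alpha * Series (fun j => b i j * z j ^ 2))^2).
   { apply pow_incr. split; auto. } lra. }
 eapply Rle_trans. apply (lsum_le _ _ _ (fun i _ => Hy i)).
 rewrite lsum_scal.
 destruct (lsum_series (fun i j => b i j * z j ^ 2) (seq 0 n) Hbz2) as [He Heq].
 rewrite Heq.
 assert (Series (fun j => lsum (fun i => b i j * z j ^ 2) (seq 0 n)) <= beta * Z).
 { unfold Z. rewrite <- Series_scal_l. apply Series_le.
   - intro j. split. apply lsum_nonneg. intros; apply Rmult_le_pos; auto.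
     replace (lsum (fun i => b i j * z j ^ 2) (seq 0 n)) with (lsum (fun i => z j ^ 2 * b i j) (seq 0 n))
       by (apply lsum_ext; intros; ring).
     rewrite lsum_scal. rewrite Rmult_comm. apply Rmult_le_compat_r; auto.
   - exact (ex_series_scal_l beta _ Hs). }
 assert (0 <= alpha). { pose proof (Hbα 0%nat 0%nat). pose proof (Hb 0%nat 0%nat). lra. }
 replace (alpha * beta * Z) with (alpha * (beta * Z)) by ring.
 apply Rmult_le_compat_l; auto.
Qed.

Lemma exp_INR_pow a d : exp (- a * INR d) = exp (- a) ^ d.
Proof. induction d. simpl. rewrite Rmult_0_r. apply exp_0.
 rewrite S_INR, <- tech_pow_Rmult, <- IHd, <- exp_plus. f_equal. ring. Qed.

Lemma dist_exp a i j : exp (- a * Rabs (INR i - INR j)) =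
  exp (- a) ^ (if Nat.leb j i then (i - j)%nat else (j - i)%nat).
Proof.
 rewrite <- exp_INR_pow. f_equal. f_equal.
 destruct (Nat.leb_spec j i).
 - rewrite minus_INR; auto. rewrite Rabs_right; [ring|]. apply Rle_ge. apply le_INR in H. lra.
 - rewrite minus_INR; [|lia]. rewrite Rabs_left; [ring|]. apply lt_INR in H. lra.
Qed.

Lemma geo_row a i m : 0 < a ->
  lsum (fun j => exp (- a * Rabs (INR i - INR j))) (seq 0 m) <= (1 + exp (-a)) / (1 - exp (-a)).
Proof.
 intros Ha. set (q := exp (-a)).
 assert (Hq0 : 0 < q) by apply exp_pos.
 assert (Hq1 : q < 1). { unfold q. rewrite <- exp_0. apply exp_increasing. lra. }
 assert (Hqp : forall n, 0 < q ^ n) by (intro; apply pow_lt; auto).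
 assert (Hqle : forall n, q ^ n <= 1) by (intro n; rewrite <- (pow1 n); apply pow_incr; lra).
 set (G := fun m => if Nat.leb m i then q ^ (i - m + 1) / (1 - q) else (1 + q - q ^ (m - i)) / (1 - q)).
 assert (HG : forall k, lsum (fun j => exp (- a * Rabs (INR i - INR j))) (seq 0 k) <= G k).
 { clear m. intro m; induction m.
   - change (lsum (fun j => exp (- a * Rabs (INR i - INR j))) nil <= G 0%nat). rewrite lsum_nil. unfold G. simpl. apply Rmult_le_pos. left; apply Hqp.
     left; apply Rinv_0_lt_compat; lra.
   - rewrite lsum_seq_S, dist_exp. fold q. unfold G in *.
     destruct (Nat.leb_spec m i); destruct (Nat.leb_spec (S m) i); destruct (Nat.leb_spec m i); try lia.
     + replace (i - m)%nat with (i - S m + 1)%nat by lia.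
       replace (i - m + 1)%nat with (S (i - S m + 1)) in IHm by lia. simpl in IHm.
       apply (Rle_trans _ _ _ (Rplus_le_compat_r _ _ _ IHm)).
       apply Req_le. field. lra.
     + assert (m = i) by lia. subst. replace (i - i)%nat with 0%nat by lia.
       replace (i - i + 1)%nat with 1%nat in IHm by lia.
       replace (S i - i)%nat with 1%nat by lia.
       apply (Rle_trans _ _ _ (Rplus_le_compat_r _ _ _ IHm)).
       apply Req_le. field. lra.
     + replace (S m - i)%nat with (S (m - i)) by lia.
       apply (Rle_trans _ _ _ (Rplus_le_compat_r _ _ _ IHm)).
       apply Req_le. simpl. field. lra. }
 eapply Rle_trans. apply HG. unfold G. destruct (Nat.leb m i).
 - apply Rmult_le_compat_r. left; apply Rinv_0_lt_compat; lra. pose proof (Hqle (i - m + 1)%nat). lra.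
 - apply Rmult_le_compat_r. left; apply Rinv_0_lt_compat; lra. pose proof (Hqp (m - i)%nat). lra.
Qed.

Lemma geo_col a j n : 0 < a ->
  lsum (fun i => exp (- a * Rabs (INR i - INR j))) (seq 0 n) <= (1 + exp (-a)) / (1 - exp (-a)).
Proof.
 intros Ha. eapply Rle_trans; [|apply (geo_row a j n Ha)]. right. apply lsum_ext.
 intros. rewrite Rabs_minus_sym. reflexivity.
Qed.

Lemma geo_const_pos a : 0 < a -> 0 < (1 + exp (-a)) / (1 - exp (-a)).
Proof. intros Ha. assert (exp (-a) < 1). { rewrite <- exp_0. apply exp_increasing. lra. }
 pose proof (exp_pos (-a)). apply Rdiv_lt_0_compat; lra. Qed.

Lemma existsb_in j Lam : existsb (Nat.eqb j) Lam = true <-> In j Lam.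
Proof. rewrite existsb_exists. split.
 - intros [x [Hx Hj]]. apply Nat.eqb_eq in Hj. subst; auto.
 - intros H. exists j. split; auto. apply Nat.eqb_refl. Qed.

Definition mask (c : nat -> R) (Lam : list nat) (j : nat) : R :=
  if existsb (Nat.eqb j) Lam then 0 else (c j) ^ 2.

Lemma mask_nonneg c Lam j : 0 <= mask c Lam j.
Proof. unfold mask. destruct existsb; [lra|apply pow2_ge_0]. Qed.

Lemma mask_le c Lam j : mask c Lam j <= c j ^ 2.
Proof. unfold mask. destruct existsb; [apply pow2_ge_0|lra]. Qed.

Lemma tail_sq_mask c Lam : tail_sq c Lam = Series (mask c Lam).
Proof. reflexivity. Qed.

Lemma mask_ex c Lam : ex_series (fun j => c j ^ 2) -> ex_series (mask c Lam).
Proof. intros H. apply (ex_series_le_R _ _ (fun j => conj (mask_nonneg c Lam j) (mask_le c Lam j)) H). Qed.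

Lemma tail_sq_nonneg c Lam : ex_series (fun j => c j ^ 2) -> 0 <= tail_sq c Lam.
Proof. intros H. rewrite tail_sq_mask.
 pose proof (lsum_le_series (mask c Lam) 0 (mask_nonneg c Lam) (mask_ex c Lam H)). exact H0. Qed.

Lemma tail_sq_nil c : tail_sq c nil = Series (fun j => c j ^ 2).
Proof. reflexivity. Qed.

Lemma tail_sq_le_full c Lam : ex_series (fun j => c j ^ 2) -> tail_sq c Lam <= Series (fun j => c j ^ 2).
Proof. intros H. rewrite tail_sq_mask. apply Series_le; auto. intro; split; [apply mask_nonneg|apply mask_le]. Qed.

Lemma tail_sq_mono c L1 L2 : ex_series (fun j => c j ^ 2) -> incl L1 L2 -> tail_sq c L2 <= tail_sq c L1.
Proof. intros H Hi. rewrite !tail_sq_mask. apply Series_le; [|apply mask_ex; auto].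
 intro j. split. apply mask_nonneg. unfold mask.
 destruct (existsb (Nat.eqb j) L2) eqn:E2. destruct (existsb (Nat.eqb j) L1); [lra|apply pow2_ge_0].
 destruct (existsb (Nat.eqb j) L1) eqn:E1; [|lra].
 apply existsb_in in E1. apply Hi in E1. apply existsb_in in E1. congruence. Qed.

Lemma tail_sq_bound c Lam B : (forall n, lsum (mask c Lam) (seq 0 n) <= B) ->
  ex_series (mask c Lam) /\ tail_sq c Lam <= B.
Proof. intros H. rewrite tail_sq_mask. apply series_bounded; auto. apply mask_nonneg. Qed.

Definition BSet (c : nat -> R) (N : nat) : R -> Prop := fun r => exists Lam : list nat,
              NoDup Lam /\ length Lam = N /\ r = sqrt (tail_sq c Lam).

Lemma bestN_eq c N : bestN c N = Glb_Rbar (BSet c N).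
Proof. reflexivity. Qed.

Lemma bestN_fin c N : is_finite (bestN c N) /\ 0 <= real (bestN c N) /\
   (forall Lam, NoDup Lam -> length Lam = N -> real (bestN c N) <= sqrt (tail_sq c Lam)).
Proof.
 rewrite bestN_eq. destruct (Glb_Rbar_correct (BSet c N)) as [Hlb Hgl].
 assert (H0 : Rbar_le 0 (Glb_Rbar (BSet c N))).
 { apply Hgl. intros x [Lam [_ [_ ->]]]. simpl. apply sqrt_pos. }
 assert (Hx : BSet c N (sqrt (tail_sq c (seq 0 N)))).
 { exists (seq 0 N). split. apply seq_NoDup. split. apply length_seq. auto. }
 assert (H1 := Hlb _ Hx).
 destruct (Glb_Rbar (BSet c N)) as [g| |] eqn:E; simpl in H0, H1; try contradiction.
 split. reflexivity. split. simpl. exact H0.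
 intros Lam Hn Hl. simpl. assert (Hy : BSet c N (sqrt (tail_sq c Lam))) by (exists Lam; auto).
 specialize (Hlb _ Hy). exact Hlb.
Qed.

Lemma bestN_approx c N eps : 0 < eps -> exists Lam, NoDup Lam /\ length Lam = N /\
  sqrt (tail_sq c Lam) < real (bestN c N) + eps.
Proof.
 intros He. destruct (bestN_fin c N) as [Hf _].
 rewrite bestN_eq in *. destruct (Glb_Rbar_correct (BSet c N)) as [Hlb Hgl].
 destruct (Glb_Rbar (BSet c N)) as [g| |] eqn:E; try discriminate Hf.
 simpl. apply Classical_Pred_Type.not_all_not_ex. intro Hn.
 assert (Rbar_le (g + eps) g).
 { try rewrite E; apply Hgl. intros x [Lam [H1 [H2 ->]]]. simpl.
   destruct (Rle_dec (g + eps) (sqrt (tail_sq c Lam))); auto.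
   exfalso. apply (Hn Lam). split; auto. split; auto. lra. }
 simpl in H. lra.
Qed.

Definition ASet (eta t : R) (c : nat -> R) : R -> Prop :=
  fun r => exists N : nat, r = Rbar_mult (bestN c N) (exp (eta * npow N t)).

Lemma AG_eq eta t c : AG_norm eta t c = Lub_Rbar (ASet eta t c).
Proof. reflexivity. Qed.

Lemma bestN_mult c N (x : R) : Rbar_mult (bestN c N) x = Finite (real (bestN c N) * x).
Proof. destruct (bestN_fin c N) as [Hf _]. destruct (bestN c N); try discriminate. reflexivity. Qed.

Lemma AG_elem eta t c : is_finite (AG_norm eta t c) -> forall N,
  real (bestN c N) * exp (eta * npow N t) <= real (AG_norm eta t c).
Proof.
 intros Hf N. rewrite AG_eq in *. destruct (Lub_Rbar_correct (ASet eta t c)) as [Hub _].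
 assert (Hx : ASet eta t c (real (bestN c N) * exp (eta * npow N t))).
 { exists N. rewrite bestN_mult. reflexivity. }
 specialize (Hub _ Hx). destruct (Lub_Rbar (ASet eta t c)); try discriminate. exact Hub.
Qed.

Lemma AG_bound eta t c B : (forall N, real (bestN c N) * exp (eta * npow N t) <= B) ->
  is_finite (AG_norm eta t c) /\ real (AG_norm eta t c) <= B.
Proof.
 intros HB. rewrite AG_eq. destruct (Lub_Rbar_correct (ASet eta t c)) as [Hub Hl].
 assert (H1 : Rbar_le (Lub_Rbar (ASet eta t c)) B).
 { apply Hl. intros x [N ->]. rewrite bestN_mult. apply HB. }
 assert (Hx : ASet eta t c (real (bestN c 0) * exp (eta * npow 0 t))).
 { exists 0%nat. rewrite bestN_mult. reflexivity. }
 specialize (Hub _ Hx).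
 destruct (Lub_Rbar (ASet eta t c)); simpl in *; try contradiction.
 split; [reflexivity|exact H1].
Qed.

Lemma AG_nonneg eta t c : is_finite (AG_norm eta t c) -> 0 <= real (AG_norm eta t c).
Proof. intros Hf. eapply Rle_trans; [|apply (AG_elem eta t c Hf 0%nat)].
 apply Rmult_le_pos. apply bestN_fin. left; apply exp_pos. Qed.

Lemma series_dom f g : (forall j, Rabs (f j) <= g j) -> ex_series g ->
  ex_series f /\ Rabs (Series f) <= Series g.
Proof.
 intros H Hg. assert (Ha : ex_series (fun j => Rabs (f j))).
 { apply (ex_series_le_R _ g); auto. intro; split; [apply Rabs_pos|auto]. }
 split. apply ex_series_Rabs; auto.
 eapply Rle_trans. apply Series_Rabs; auto. apply Series_le; auto.
 intro; split; [apply Rabs_pos|auto].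
Qed.

Lemma tail_Av (A : nat -> nat -> R) (v : nat -> R) (Lam : list nat)
  (b1 b2 : nat -> nat -> R) (z1 z2 : nat -> R) a1 be1 a2 be2 :
  (forall i j, 0 <= b1 i j) -> (forall j, 0 <= z1 j) ->
  (forall i m, lsum (b1 i) (seq 0 m) <= a1) ->
  (forall j n, lsum (fun i => b1 i j) (seq 0 n) <= be1) ->
  ex_series (fun j => z1 j ^ 2) ->
  (forall i j, 0 <= b2 i j) -> (forall j, 0 <= z2 j) ->
  (forall i m, lsum (b2 i) (seq 0 m) <= a2) ->
  (forall j n, lsum (fun i => b2 i j) (seq 0 n) <= be2) ->
  ex_series (fun j => z2 j ^ 2) ->
  (forall i, ~ In i Lam -> forall j, Rabs (A i j * v j) <= b1 i j * z1 j + b2 i j * z2 j) ->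
  ex_series (mask (apply_mat A v) Lam) /\
  tail_sq (apply_mat A v) Lam <= 2 * (a1 * be1 * Series (fun j => z1 j ^ 2))
                                + 2 * (a2 * be2 * Series (fun j => z2 j ^ 2)).
Proof.
 intros Hb1 Hz1 Hr1 Hc1 Hs1 Hb2 Hz2 Hr2 Hc2 Hs2 Hdom.
 destruct (schur b1 z1 a1 be1 Hb1 Hz1 Hr1 Hc1 Hs1) as [He1 Hn1].
 destruct (schur b2 z2 a2 be2 Hb2 Hz2 Hr2 Hc2 Hs2) as [He2 Hn2].
 apply tail_sq_bound. intro n.
 eapply Rle_trans. apply (lsum_le _ (fun i => 2 * (Series (fun j => b1 i j * z1 j))^2 +
                                         2 * (Series (fun j => b2 i j * z2 j))^2)).
 - intros i _. unfold mask. destruct (existsb (Nat.eqb i) Lam) eqn:E.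
   + pose proof (pow2_ge_0 (Series (fun j => b1 i j * z1 j))).
     pose proof (pow2_ge_0 (Series (fun j => b2 i j * z2 j))). lra.
   + assert (Hni : ~ In i Lam). { intro H. apply existsb_in in H. congruence. }
     destruct (series_dom (fun j => A i j * v j) (fun j => b1 i j * z1 j + b2 i j * z2 j)
                 (Hdom i Hni) (ex_series_plus _ _ (He1 i) (He2 i))) as [_ Hle].
     rewrite Series_plus in Hle by auto.
     unfold apply_mat.
     set (s := Series (fun j => A i j * v j)) in *.
     set (y1 := Series (fun j => b1 i j * z1 j)) in *.
     set (y2 := Series (fun j => b2 i j * z2 j)) in *.
     assert (s ^ 2 <= (y1 + y2) ^ 2).
     { rewrite <- (pow2_abs s). apply pow_incr. split; auto. apply Rabs_pos. }
     clearbody s y1 y2. assert ((y1 + y2)^2 <= 2 * y1^2 + 2 * y2^2) by (pose proof (pow2_ge_0 (y1 - y2)); nra). lra.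
 - rewrite lsum_plus, !lsum_scal. specialize (Hn1 n). specialize (Hn2 n). lra.
Qed.

Definition ball (r j : nat) : list nat := seq (j - r) (2 * r + 1).

Lemma in_ball r i j : Rabs (INR i - INR j) <= INR r -> In i (ball r j).
Proof.
 intros H. unfold ball. apply in_seq.
 assert (H1 : INR i <= INR j + INR r) by (apply Rabs_le_between' in H; lra).
 assert (H2 : INR j <= INR i + INR r) by (apply Rabs_le_between' in H; lra).
 rewrite <- plus_INR in H1, H2. apply INR_le in H1. apply INR_le in H2. lia.
Qed.

Lemma length_balls (r : nat -> nat) S :
  INR (length (flat_map (fun j => ball (r j) j) S)) = lsum (fun j => 2 * INR (r j) + 1) S.
Proof.
 induction S; [reflexivity|]. simpl flat_map. rewrite length_app, plus_INR, IHS, lsum_cons.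
 unfold ball. rewrite length_seq. rewrite plus_INR, mult_INR. simpl. ring.
Qed.

Lemma pad (L : list nat) N : (length L <= N)%nat -> exists L', NoDup L' /\ length L' = N /\ incl L L'.
Proof.
 intros H. destruct (incl_seq_max L) as [m Hm].
 set (L0 := nodup Nat.eq_dec L).
 assert (Hl0 : (length L0 <= length L)%nat).
 { apply NoDup_incl_length. apply NoDup_nodup. intros x Hx. apply nodup_In in Hx; auto. }
 exists (L0 ++ seq m (N - length L0)). split; [|split].
 - apply NoDup_app. apply NoDup_nodup. apply seq_NoDup.
   intros x Hx Hx2. apply nodup_In in Hx. apply Hm in Hx. apply in_seq in Hx. apply in_seq in Hx2. lia.
 - rewrite length_app, length_seq. lia.
 - intros x Hx. apply in_or_app. left. apply nodup_In. auto.
Qed.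

Section VFacts.
Variables (eta t : R) (v : nat -> R).
Hypothesis Hv : in_AG eta t v.

Lemma v_series : ex_series (fun j => v j ^ 2).
Proof. apply Hv. Qed.

Lemma v_bN N : real (bestN v N) <= real (AG_norm eta t v) * exp (- eta * npow N t).
Proof.
 pose proof (AG_elem eta t v (proj2 Hv) N).
 replace (- eta * npow N t) with (- (eta * npow N t)) by ring. rewrite exp_Ropp.
 pose proof (exp_pos (eta * npow N t)).
 apply (Rmult_le_reg_r (exp (eta * npow N t))); auto.
 rewrite Rmult_assoc, Rinv_l by lra. lra.
Qed.

Lemma v_M_nonneg : 0 <= real (AG_norm eta t v).
Proof. apply AG_nonneg. apply Hv. Qed.

Lemma v_norm : Series (fun j => v j ^ 2) <= (real (AG_norm eta t v))^2.
Proof.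
 set (M := real (AG_norm eta t v)).
 assert (HM : 0 <= M) by apply v_M_nonneg.
 assert (Hb : real (bestN v 0) <= M).
 { pose proof (v_bN 0). simpl npow in H. rewrite Rmult_0_r, exp_0, Rmult_1_r in H. exact H. }
 assert (Hs : sqrt (Series (fun j => v j ^ 2)) <= M).
 { apply Rle_plus_epsilon. intros e He. destruct (bestN_approx v 0 e He) as [Lam [_ [Hl Hlt]]].
   destruct Lam; [|discriminate]. rewrite tail_sq_nil in Hlt. lra. }
 assert (0 <= Series (fun j => v j ^ 2)).
 { pose proof (lsum_le_series (fun j => v j ^ 2) 0 (fun j => pow2_ge_0 (v j)) v_series). exact H. }
 rewrite <- (sqrt_sqrt (Series (fun j => v j ^ 2))) by auto.
 replace (M ^ 2) with (M * M) by ring. apply Rmult_le_compat; auto; apply sqrt_pos.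
Qed.

Lemma v_coef j : Rabs (v j) <= real (AG_norm eta t v).
Proof.
 pose proof v_norm. pose proof (lsum_le_series (fun j => v j ^ 2) (S j) (fun j => pow2_ge_0 (v j)) v_series).
 rewrite lsum_seq_S in H0.
 assert (0 <= lsum (fun j => v j ^ 2) (seq 0 j)) by (apply lsum_nonneg; intros; apply pow2_ge_0).
 assert (v j ^ 2 <= real (AG_norm eta t v) ^ 2) by lra.
 rewrite <- pow2_abs in H2.
 rewrite <- (sqrt_pow2 (Rabs (v j))) by apply Rabs_pos.
 rewrite <- (sqrt_pow2 (real (AG_norm eta t v))) by apply v_M_nonneg.
 apply sqrt_le_1_alt. exact H2.
Qed.
End VFacts.

Definition Gc (a : R) := (1 + exp (-a)) / (1 - exp (-a)).

Section AvBounds.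
Variables (A : nat -> nat -> R) (c a : R).
Hypothesis Hc : 0 < c.
Hypothesis Ha : 0 < a.
Hypothesis HA : forall m n, Rabs (A m n) <= c * exp (- a * Rabs (INR m - INR n)).

Definition bA (i j : nat) := c * exp (- a * Rabs (INR i - INR j)).

Lemma bA_nonneg i j : 0 <= bA i j.
Proof. unfold bA. apply Rmult_le_pos; [lra|left; apply exp_pos]. Qed.

Lemma bA_row i m : lsum (bA i) (seq 0 m) <= c * Gc a.
Proof. unfold bA. rewrite lsum_scal. apply Rmult_le_compat_l; [lra|apply geo_row; auto]. Qed.

Lemma bA_col j n : lsum (fun i => bA i j) (seq 0 n) <= c * Gc a.
Proof. unfold bA. rewrite lsum_scal. apply Rmult_le_compat_l; [lra|apply geo_col; auto]. Qed.

Lemma zero_series : ex_series (fun j : nat => (fun _ : nat => 0) j ^ 2) /\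
   Series (fun j : nat => (fun _ : nat => 0) j ^ 2) = 0.
Proof.
 assert (E : is_series (fun j : nat => (fun _ : nat => 0) j ^ 2) 0).
 { eapply is_series_ext; [|apply is_series_zero]. intro; simpl; ring. }
 split. exists 0; auto. apply is_series_unique; auto.
Qed.

Lemma Av_gen (v z : nat -> R) (Lam : list nat) :
  (forall j, 0 <= z j) -> ex_series (fun j => z j ^ 2) ->
  (forall i, ~ In i Lam -> forall j, Rabs (A i j * v j) <= bA i j * z j) ->
  ex_series (mask (apply_mat A v) Lam) /\
  tail_sq (apply_mat A v) Lam <= 2 * ((c * Gc a) * (c * Gc a)) * Series (fun j => z j ^ 2).
Proof.
 intros Hz Hs Hd. destruct zero_series as [Z1 Z2].
 destruct (tail_Av A v Lam bA bA z (fun _ => 0) (c * Gc a) (c * Gc a) (c * Gc a) (c * Gc a)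
   bA_nonneg Hz bA_row bA_col Hs bA_nonneg (fun _ => Rle_refl 0) bA_row bA_col Z1) as [H1 H2].
 { intros i Hi j. rewrite Rmult_0_r, Rplus_0_r. auto. }
 split; auto. rewrite Z2 in H2. lra.
Qed.

Lemma Av_full (v : nat -> R) Lam : ex_series (fun j => v j ^ 2) ->
  ex_series (mask (apply_mat A v) Lam) /\
  tail_sq (apply_mat A v) Lam <= 2 * ((c * Gc a) * (c * Gc a)) * Series (fun j => v j ^ 2).
Proof.
 intros Hs.
 assert (E : Series (fun j => Rabs (v j) ^ 2) = Series (fun j => v j ^ 2)).
 { apply Series_ext. intro; apply pow2_abs. }
 rewrite <- E. apply Av_gen. intro; apply Rabs_pos.
 eapply ex_series_ext; [|exact Hs]. intro; rewrite pow2_abs; reflexivity.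
 intros i _ j. rewrite Rabs_mult. apply Rmult_le_compat_r. apply Rabs_pos. apply HA.
Qed.

Lemma Av_band p (v : nat -> R) Lam : ex_series (fun j => v j ^ 2) -> banded p A ->
  tail_sq (apply_mat A v) (flat_map (ball p) Lam) <= 2 * ((c * Gc a) * (c * Gc a)) * tail_sq v Lam.
Proof.
 intros Hs Hb.
 set (z := fun j => if existsb (Nat.eqb j) Lam then 0 else Rabs (v j)).
 assert (Ez : forall j, z j ^ 2 = mask v Lam j).
 { intro j. unfold z, mask. destruct existsb. simpl; ring. apply pow2_abs. }
 assert (E : Series (fun j => z j ^ 2) = tail_sq v Lam).
 { rewrite tail_sq_mask. apply Series_ext. auto. }
 rewrite <- E. apply Av_gen.
 - intro j; unfold z; destruct existsb; [lra|apply Rabs_pos].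
 - eapply ex_series_ext; [|apply (mask_ex v Lam Hs)]. intro; rewrite Ez; reflexivity.
 - intros i Hi j. unfold z. destruct (existsb (Nat.eqb j) Lam) eqn:Ej.
   + apply existsb_in in Ej. rewrite (Hb i j). rewrite Rmult_0_l, Rabs_R0, Rmult_0_r; lra.
     destruct (Rlt_dec (INR p) (Rabs (INR i - INR j))) as [Hl|Hl]; auto.
     exfalso. apply Hi. apply in_flat_map. exists j. split; auto. apply in_ball. lra.
   + rewrite Rabs_mult. apply Rmult_le_compat_r. apply Rabs_pos. apply HA.
Qed.
End AvBounds.

Lemma Rpower_pos x y : 0 < Rpower x y.
Proof. unfold Rpower. apply exp_pos. Qed.

Lemma exp_mono x y : x <= y -> exp x <= exp y.
Proof. intros [H|H]. left; apply exp_increasing; auto. subst; lra. Qed.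

Lemma Rpower_subadd x y t : 0 < x -> 0 < y -> 0 < t <= 1 ->
  Rpower (x + y) t <= Rpower x t + Rpower y t.
Proof.
 intros Hx Hy Ht.
 assert (D : forall z, 0 < z -> Rpower z t = z * Rpower z (t - 1)).
 { intros z Hz. replace t with (1 + (t - 1)) at 1 by ring. rewrite Rpower_plus, Rpower_1; auto. }
 assert (Mo : forall z w, 0 < z -> z <= w -> Rpower w (t - 1) <= Rpower z (t - 1)).
 { intros z w Hz Hzw. unfold Rpower. apply exp_mono.
   assert (ln z <= ln w) by (apply ln_le; auto). nra. }
 rewrite (D (x + y)), (D x), (D y); try lra.
 pose proof (Mo x (x + y) Hx ltac:(lra)). pose proof (Mo y (x + y) Hy ltac:(lra)).
 rewrite Rmult_plus_distr_r. apply Rplus_le_compat; apply Rmult_le_compat_l; lra.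
Qed.

Lemma npow_S n t : npow (S n) t = Rpower (INR (S n)) t.
Proof. reflexivity. Qed.

Lemma npow_nonneg n t : 0 <= npow n t.
Proof. destruct n. simpl; lra. left; apply Rpower_pos. Qed.

Lemma npow_succ_le n t : 0 < t <= 1 -> npow (S n) t <= npow n t + 1.
Proof.
 intros Ht. destruct n.
 - rewrite npow_S. simpl npow. replace (INR 1) with 1 by (simpl; ring).
   unfold Rpower. rewrite ln_1, Rmult_0_r, exp_0. lra.
 - rewrite !npow_S. rewrite S_INR.
   pose proof (Rpower_subadd (INR (S n)) 1 t ltac:(apply lt_0_INR; lia) ltac:(lra) Ht).
   unfold Rpower at 3 in H. rewrite ln_1, Rmult_0_r, exp_0 in H. exact H.
Qed.

Theorem case_a (A : nat -> nat -> R) c a p eta t :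
  0 < c -> 0 < a -> (forall m n, Rabs (A m n) <= c * exp (- a * Rabs (INR m - INR n))) ->
  banded p A -> 0 < eta -> 0 < t <= 1 ->
  exists C : R, forall v : nat -> R, in_AG eta t v ->
    in_AG (eta / Rpower (2 * INR p + 1) t) t (apply_mat A v) /\
    real (AG_norm (eta / Rpower (2 * INR p + 1) t) t (apply_mat A v))
      <= C * real (AG_norm eta t v).
Proof.
 intros Hc Ha HA Hb He Ht.
 set (K := c * Gc a).
 assert (HK : 0 < K). { unfold K, Gc. apply Rmult_lt_0_compat; auto. apply geo_const_pos; auto. }
 assert (EK : K = c * Gc a) by reflexivity. clearbody K.
 exists (sqrt 2 * K * exp eta). intros v Hv.
 set (M := real (AG_norm eta t v)).
 assert (HM : 0 <= M) by (apply (v_M_nonneg eta t v Hv)).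
 assert (EM : M = real (AG_norm eta t v)) by reflexivity. clearbody M.
 assert (Hs : ex_series (fun j => v j ^ 2)) by apply Hv.
 set (P := (2 * p + 1)%nat).
 assert (HP : INR P = 2 * INR p + 1). { unfold P. rewrite plus_INR, mult_INR. simpl. ring. }
 assert (HPp : 0 < INR P) by (rewrite HP; pose proof (pos_INR p); lra).
 assert (Hbound : forall N', real (bestN (apply_mat A v) N') *
     exp (eta / Rpower (2 * INR p + 1) t * npow N' t) <= sqrt 2 * K * exp eta * M).
 { intro N'. set (N := (N' / P)%nat).
   assert (HPn : P <> 0%nat) by (unfold P; lia).
   assert (HN1 : (P * N <= N')%nat) by apply Nat.Div0.mul_div_le.
   assert (HN2 : (N' < P * (N + 1))%nat).
   { pose proof (Nat.div_mod N' P HPn). pose proof (Nat.mod_upper_bound N' P HPn). unfold N. lia. }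
   assert (Hst : real (bestN (apply_mat A v) N') <= sqrt 2 * K * real (bestN v N)).
   { apply Rle_plus_epsilon. intros e He'.
     assert (He2 : 0 < e / (sqrt 2 * K)).
     { apply Rdiv_lt_0_compat; auto. apply Rmult_lt_0_compat; auto. apply sqrt_lt_R0; lra. }
     destruct (bestN_approx v N _ He2) as [Lam [Hnd [Hl Hlt]]].
     assert (Hlen : (length (flat_map (ball p) Lam) <= N')%nat).
     { apply INR_le. pose proof (length_balls (fun _ => p) Lam) as E. simpl in E.
       change (flat_map (fun j => ball p j) Lam) with (flat_map (ball p) Lam) in E. rewrite E.
       rewrite lsum_const, Hl. apply le_INR in HN1. rewrite mult_INR, HP in HN1. lra. }
     destruct (pad _ _ Hlen) as [L' [Hnd' [Hl' Hi']]].
     destruct (bestN_fin (apply_mat A v) N') as [_ [_ Hle]].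
     eapply Rle_trans. apply (Hle L' Hnd' Hl').
     assert (Ht1 := tail_sq_mono (apply_mat A v) _ _ (proj1 (Av_full A c a Hc Ha HA v nil Hs)) Hi').
     assert (Ht2 := Av_band A c a Hc Ha HA p v Lam Hs Hb). rewrite <- EK in Ht2.
     assert (Hsq : sqrt (tail_sq (apply_mat A v) L') <= sqrt 2 * K * sqrt (tail_sq v Lam)).
     { rewrite <- (sqrt_pow2 K) by lra. rewrite <- !sqrt_mult_alt. apply sqrt_le_1_alt.
       replace (2 * K ^ 2 * tail_sq v Lam) with (2 * (K * K) * tail_sq v Lam) by ring. lra.
       all: try (apply Rmult_le_pos; [lra|apply pow2_ge_0]); try lra. }
     eapply Rle_trans. apply Hsq.
     assert (Hs2 : 0 < sqrt 2) by (apply sqrt_lt_R0; lra).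
     assert (0 < sqrt 2 * K) by (apply Rmult_lt_0_compat; auto).
     replace e with (sqrt 2 * K * (e / (sqrt 2 * K))) by (field; repeat split; lra).
     rewrite <- Rmult_plus_distr_l. apply Rmult_le_compat_l; lra. }
   pose proof (v_bN eta t v Hv N) as HbN. rewrite <- EM in HbN.
   assert (Hexp : eta / Rpower (2 * INR p + 1) t * npow N' t <= eta * npow N t + eta).
   { destruct N' as [|N'']. simpl. pose proof (npow_nonneg N t) as Hnn. 
     assert (0 <= eta * npow N t) by (apply Rmult_le_pos; lra). rewrite Rmult_0_r. lra.
     rewrite npow_S. rewrite <- HP.
     assert (Rpower (INR (S N'')) t <= Rpower (INR P) t * (npow N t + 1)).
     { eapply Rle_trans; [|apply Rmult_le_compat_l; [left; apply Rpower_pos|apply (npow_succ_le N t Ht)]].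
       destruct N as [|N0]. 
       - rewrite npow_S. replace (INR 1) with 1 by (simpl; ring). unfold Rpower at 3.
         rewrite ln_1, Rmult_0_r, exp_0, Rmult_1_r. apply Rle_Rpower_l. lra. split.
         apply lt_0_INR; lia. apply le_INR. lia.
       - rewrite npow_S, Rpower_mult_distr; [|lra|apply lt_0_INR; lia].
         apply Rle_Rpower_l. lra. split. apply lt_0_INR; lia. rewrite <- mult_INR. apply le_INR. lia. }
     unfold Rdiv. rewrite Rmult_assoc.
     replace (eta * npow N t + eta) with (eta * (npow N t + 1)) by ring.
     apply Rmult_le_compat_l. lra.
     pose proof (Rpower_pos (INR P) t).
     apply (Rmult_le_reg_l (Rpower (INR P) t)); auto. rewrite <- Rmult_assoc, Rinv_r by lra. rewrite Rmult_1_l. lra. }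
   assert (0 <= real (bestN v N)) by apply bestN_fin.
   assert (0 <= real (bestN (apply_mat A v) N')) by apply bestN_fin.
   eapply Rle_trans. apply Rmult_le_compat. auto. left; apply exp_pos. exact Hst. apply exp_mono. exact Hexp.
   rewrite exp_plus.
   assert (real (bestN v N) * exp (eta * npow N t) <= M).
   { assert (X: real (bestN v N) * exp (eta*npow N t) <= M * exp(-eta*npow N t) * exp(eta*npow N t))
       by (apply Rmult_le_compat_r; [left; apply exp_pos| exact HbN]).
     rewrite Rmult_assoc, <- exp_plus in X. replace (-eta*npow N t + eta*npow N t) with 0 in X by ring.
     rewrite exp_0, Rmult_1_r in X. exact X. }
   assert (0 < sqrt 2 * K) by (apply Rmult_lt_0_compat; auto; apply sqrt_lt_R0; lra).
   pose proof (exp_pos eta). 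
   replace (sqrt 2 * K * real (bestN v N) * (exp (eta * npow N t) * exp eta))
     with ((sqrt 2 * K * exp eta) * (real (bestN v N) * exp (eta * npow N t))) by ring.
   apply Rmult_le_compat_l. apply Rmult_le_pos; lra. auto. }
 rewrite EM in Hbound. destruct (AG_bound _ _ _ _ Hbound) as [Hf Hle].
 split; [split|]; auto. 2: rewrite EM; auto.
 eapply ex_series_ext; [|apply (proj1 (Av_full A c a Hc Ha HA v nil Hs))]. intro; reflexivity.
Qed.

Lemma nat_between y : 0 <= y -> exists n : nat, y <= INR n <= y + 1.
Proof.
 intros Hy. destruct (archimed y) as [H1 H2].
 assert (Hz : (0 <= up y)%Z). { apply le_IZR. lra. }
 exists (Z.to_nat (up y)). rewrite INR_IZR_INZ, Z2Nat.id by auto. lra.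
Qed.

Lemma count_lsum (f : nat -> bool) l : INR (length (filter f l)) = lsum (fun x => if f x then 1 else 0) l.
Proof. induction l; [reflexivity|]. simpl filter. rewrite lsum_cons. destruct (f a).
 simpl length. rewrite S_INR, IHl. ring. rewrite IHl. ring. Qed.

Lemma lsum_swap (F : nat -> nat -> R) l1 l2 :
  lsum (fun j => lsum (fun k => F j k) l2) l1 = lsum (fun k => lsum (fun j => F j k) l1) l2.
Proof.
 induction l1. rewrite lsum_nil. symmetry. rewrite <- (Rmult_0_l (INR (length l2))), <- lsum_const.
 apply lsum_ext. intros; reflexivity.
 rewrite lsum_cons, IHl1. rewrite <- lsum_plus. apply lsum_ext. intros. rewrite lsum_cons. reflexivity.
Qed.

Lemma filter_split_len (f : nat -> bool) l :
  (length (filter f l) + length (filter (fun x => negb (f x)) l))%nat = length l.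
Proof. induction l; auto. simpl. destruct (f a); simpl; lia. Qed.

Lemma filter_all_len (f : nat -> bool) m K : (m <= K)%nat -> (forall k, (k < m)%nat -> f k = true) ->
  (m <= length (filter f (seq 0 K)))%nat.
Proof.
 intros Hm Hf. replace m with (length (seq 0 m)) by apply length_seq.
 apply NoDup_incl_length. apply seq_NoDup. intros x Hx. apply in_seq in Hx.
 apply filter_In. split. apply in_seq. lia. apply Hf. lia.
Qed.

Lemma Rpower_ge_1 x y : 1 <= x -> 0 <= y -> 1 <= Rpower x y.
Proof. intros Hx Hy. unfold Rpower. rewrite <- exp_0. apply exp_mono.
 assert (0 <= ln x). { rewrite <- ln_1. apply ln_le; lra. } nra. Qed.

Lemma tangent_ineq Y th s : 0 < Y -> 0 < th -> 0 <= s ->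
  (1 + s) * th * Rpower Y s <= Rpower (Y + th) (1 + s) - Rpower Y (1 + s).
Proof.
 intros HY Hth Hs.
 destruct (MVT_cor2 (fun x => Rpower x (1 + s)) (fun x => (1 + s) * Rpower x (1 + s - 1)) Y (Y + th))
   as [c0 [Hc1 Hc2]]; [lra| |].
 { intros c0 Hc. apply derivable_pt_lim_power. lra. }
 rewrite Hc1. replace (1 + s - 1) with s by ring. replace (Y + th - Y) with th by ring.
 assert (Rpower Y s <= Rpower c0 s). { apply Rle_Rpower_l; lra. }
 replace ((1 + s) * Rpower c0 s * th) with ((1 + s) * th * Rpower c0 s) by ring.
 apply Rmult_le_compat_l; auto. apply Rmult_le_pos; lra.
Qed.

Definition Yk (X th : R) (k : nat) := X - INR k * th.
Definition Uk (X th s : R) (k : nat) := if Rlt_dec 0 (Yk X th k) then Rpower (Yk X th k) s else 0.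
Definition Wk (X th s : R) (k : nat) := if Rlt_dec 0 (Yk X th k) then Rpower (Yk X th k) (1 + s) else 0.

Lemma Wk_nonneg X th s k : 0 <= Wk X th s k.
Proof. unfold Wk. destruct Rlt_dec. left; apply Rpower_pos. lra. Qed.

Lemma Uk_nonneg X th s k : 0 <= Uk X th s k.
Proof. unfold Uk. destruct Rlt_dec. left; apply Rpower_pos. lra. Qed.

Lemma tele_step X th s k : 0 < th -> 0 <= s ->
  (1 + s) * th * Uk X th s (S k) <= Wk X th s k - Wk X th s (S k).
Proof.
 intros Hth Hs. unfold Uk, Wk.
 assert (E : Yk X th k = Yk X th (S k) + th) by (unfold Yk; rewrite S_INR; ring).
 destruct (Rlt_dec 0 (Yk X th (S k))) as [H|H].
 - destruct (Rlt_dec 0 (Yk X th k)) as [H'|H']; [|lra].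
   rewrite E. apply tangent_ineq; auto.
 - rewrite Rmult_0_r, Rminus_0_r. destruct Rlt_dec. left; apply Rpower_pos. lra.
Qed.

Lemma tele_sum X th s K : 0 < X -> 0 < th -> 0 <= s ->
  lsum (Uk X th s) (seq 0 K) <= Rpower X s + Rpower X (1 + s) / ((1 + s) * th).
Proof.
 intros HX Hth Hs.
 assert (Hp : 0 < (1 + s) * th) by (apply Rmult_lt_0_compat; lra).
 assert (Cl : forall K, lsum (Uk X th s) (seq 0 (S K)) <= Rpower X s + (Wk X th s 0 - Wk X th s K) / ((1 + s) * th)).
 { induction K0.
   - simpl seq. rewrite lsum_cons, lsum_nil. unfold Uk, Yk. simpl INR.
     replace (X - 0 * th) with X by ring. destruct Rlt_dec; [|lra]. replace (Wk X th s 0 - Wk X th s 0) with 0 by ring.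
     unfold Rdiv. rewrite Rmult_0_l. lra.
   - rewrite lsum_seq_S. pose proof (tele_step X th s K0 Hth Hs).
     assert (Uk X th s (S K0) <= (Wk X th s K0 - Wk X th s (S K0)) / ((1 + s) * th)).
     { apply (Rmult_le_reg_l ((1 + s) * th)); auto. field_simplify; lra. }
     unfold Rdiv in *. lra. }
 destruct K. rewrite lsum_nil. pose proof (Rpower_pos X s). pose proof (Rpower_pos X (1+s)).
 assert (0 <= Rpower X (1 + s) / ((1 + s) * th)) by (apply Rdiv_le_0_compat; lra). lra.
 eapply Rle_trans. apply Cl. unfold Wk at 1, Yk. simpl INR. replace (X - 0 * th) with X by ring.
 destruct Rlt_dec; [|lra]. pose proof (Wk_nonneg X th s K).
 unfold Rdiv. apply Rplus_le_compat_l. apply Rmult_le_compat_r. left; apply Rinv_0_lt_compat; auto. lra.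
Qed.

Section VB.
Variables (eta t : R) (v : nat -> R).
Hypothesis Hv : in_AG eta t v.
Hypothesis Het : 0 < eta.
Hypothesis Ht : 0 < t <= 1.

Lemma nat_for Y : 0 < Y -> exists n, INR n <= Rpower Y (/ t) + 1 /\
   real (bestN v n) <= real (AG_norm eta t v) * exp (- eta * Y).
Proof.
 intros HY. destruct (nat_between (Rpower Y (/ t))) as [n [H1 H2]]. left; apply Rpower_pos.
 exists n. split; auto.
 pose proof (Rpower_pos Y (/ t)).
 assert (Hn : (0 < n)%nat). { apply INR_lt. simpl. lra. }
 eapply Rle_trans. apply (v_bN eta t v Hv n).
 apply Rmult_le_compat_l. apply (v_M_nonneg eta t v Hv). apply exp_mono.
 assert (Y <= npow n t).
 { destruct n; [lia|]. rewrite npow_S.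
   replace Y with (Rpower (Rpower Y (/ t)) t).
   apply Rle_Rpower_l; lra. rewrite Rpower_mult. rewrite Rinv_l by lra. apply Rpower_1; auto. }
 nra.
Qed.

Lemma counting sig N (l : list nat) : 0 < sig -> real (bestN v N) <= sig -> NoDup l ->
  (forall j, In j l -> sig < Rabs (v j)) -> (length l <= N + 4)%nat.
Proof.
 intros Hs Hb Hnd Hl.
 destruct (bestN_approx v N sig Hs) as [Lam [HLnd [HLl HLt]]].
 assert (Hser := v_series eta t v Hv).
 assert (Ht0 := tail_sq_nonneg v Lam Hser).
 assert (Htail : tail_sq v Lam < 4 * sig ^ 2).
 { rewrite <- (sqrt_sqrt (tail_sq v Lam)) by auto.
   pose proof (sqrt_pos (tail_sq v Lam)).
   assert (sqrt (tail_sq v Lam) < 2 * sig) by lra.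
   clear -H H0 Hs. set (x := sqrt (tail_sq v Lam)) in *. clearbody x. nra. }
 set (f := fun j => existsb (Nat.eqb j) Lam).
 pose proof (filter_split_len f l) as Hsplit.
 assert (H1 : (length (filter f l) <= N)%nat).
 { rewrite <- HLl. apply NoDup_incl_length. apply NoDup_filter; auto.
   intros x Hx. apply filter_In in Hx. apply existsb_in. apply Hx. }
 assert (H2 : (length (filter (fun x => negb (f x)) l) < 4)%nat).
 { set (l2 := filter (fun x => negb (f x)) l).
   assert (Hl2 : forall j, In j l2 -> sig < Rabs (v j) /\ ~ In j Lam).
   { intros j Hj. apply filter_In in Hj. destruct Hj as [Hj Hn]. split; auto.
     intro Hc. apply existsb_in in Hc. unfold f in Hn. rewrite Hc in Hn. discriminate. }
   assert (Hsum : lsum (mask v Lam) l2 <= tail_sq v Lam).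
   { rewrite tail_sq_mask. apply lsum_le_series_nodup. apply mask_nonneg. apply mask_ex; auto.
     apply NoDup_filter; auto. }
   assert (Hlow : sig ^ 2 * INR (length l2) <= lsum (mask v Lam) l2).
   { rewrite <- lsum_const. apply lsum_le. intros j Hj. destruct (Hl2 j Hj) as [Ha Hb'].
     unfold mask. destruct (existsb (Nat.eqb j) Lam) eqn:E. apply existsb_in in E; tauto.
     rewrite <- (pow2_abs (v j)). apply pow_incr. split; lra. }
   assert (INR (length l2) < 4).
   { assert (0 < sig ^ 2) by (apply pow_lt; auto). 
     apply (Rmult_lt_reg_l (sig ^ 2)); auto. lra. }
   apply INR_lt. simpl. lra. }
 lia.
Qed.

Lemma S_exists tau : 0 < tau -> exists S : list nat, NoDup S /\ forall j, In j S <-> tau < Rabs (v j).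
Proof.
 intros Htau. assert (Hl := ex_series_lim_0 _ (v_series eta t v Hv)).
 apply is_lim_seq_spec in Hl. assert (He : 0 < tau ^ 2) by (apply pow_lt; auto).
 destruct (Hl (mkposreal _ He)) as [N0 HN]. simpl in HN.
 exists (filter (fun j => if Rlt_dec tau (Rabs (v j)) then true else false) (seq 0 N0)).
 split. apply NoDup_filter, seq_NoDup.
 intro j. rewrite filter_In, in_seq. split.
 - intros [_ H]. destruct Rlt_dec; auto; discriminate.
 - intros H. split. split. lia. destruct (Nat.lt_ge_cases j N0); auto.
   specialize (HN j H0). cbv beta in HN. rewrite Rminus_0_r, Rabs_pos_eq in HN by apply pow2_ge_0.
   exfalso. pose proof (pow2_abs (v j)) as E2. simpl in E2.
   assert (tau * tau < Rabs (v j) * Rabs (v j)) by (apply Rmult_le_0_lt_compat; lra). lra.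
   destruct Rlt_dec; auto.
Qed.
End VB.

Definition ind (L : list nat) (j : nat) : R := if existsb (Nat.eqb j) L then 1 else 0.

Lemma ind_nonneg L j : 0 <= ind L j.
Proof. unfold ind; destruct existsb; lra. Qed.

Lemma ind_bound L n : NoDup L -> lsum (ind L) (seq 0 n) <= INR (length L).
Proof.
 intros H. unfold ind. rewrite <- count_lsum. apply le_INR. apply NoDup_incl_length.
 apply NoDup_filter, seq_NoDup. intros x Hx. apply filter_In in Hx. apply existsb_in. apply Hx.
Qed.

Lemma z_series (z w : nat -> R) (L : list nat) tau :
  NoDup L -> (forall j, 0 <= w j) -> ex_series w ->
  (forall j, z j ^ 2 <= w j + tau ^ 2 * ind L j) ->
  ex_series (fun j => z j ^ 2) /\ Series (fun j => z j ^ 2) <= Series w + tau ^ 2 * INR (length L).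
Proof.
 intros Hnd Hw He Hz. apply series_bounded. intro; apply pow2_ge_0.
 intro n. eapply Rle_trans. apply (lsum_le _ (fun j => w j + tau ^ 2 * ind L j)). auto.
 rewrite lsum_plus, lsum_scal. apply Rplus_le_compat. apply lsum_le_series; auto.
 apply Rmult_le_compat_l. apply pow2_ge_0. apply ind_bound; auto.
Qed.

Section Core.
Variables (A : nat -> nat -> R) (c a eta t : R) (v : nat -> R).
Hypothesis Hc : 0 < c.
Hypothesis Ha : 0 < a.
Hypothesis HA : forall m n, Rabs (A m n) <= c * exp (- a * Rabs (INR m - INR n)).
Hypothesis Het : 0 < eta.
Hypothesis Hea : eta < a.
Hypothesis Ht : 0 < t <= 1.
Hypothesis Hv : in_AG eta t v.

Definition ap := (a + eta) / 2.
Definition a2 := (a - eta) / 2.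
Definition th := ap / eta.

Lemma core_b X N' : 0 < X -> 0 < real (AG_norm eta t v) ->
  3 * Rpower X (/ t) + 2 * Rpower X (1 + / t) / ((1 + / t) * th) + 10 * X / th + 15 <= INR N' ->
  real (bestN (apply_mat A v) N') <=
    sqrt (2 * ((c * Gc a) ^ 2 + (c * Gc a2) ^ 2) * (Rpower X (/ t) + 5)) *
    (real (AG_norm eta t v) * exp (- eta * X)).
Proof.
 intros HX HM Hcnt.
 remember (real (AG_norm eta t v)) as M eqn:EM.
 assert (Hap : eta < ap /\ ap < a) by (unfold ap; lra).
 assert (Ha2 : 0 < a2) by (unfold a2; lra).
 assert (Hth : 1 < th). { unfold th. apply (Rmult_lt_reg_r eta); auto. unfold Rdiv. rewrite Rmult_assoc, Rinv_l; lra. }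
 assert (Hthe : th * eta = ap) by (unfold th; field; lra).
 assert (Hs : 0 < / t) by (apply Rinv_0_lt_compat; lra).
 remember (M * exp (- eta * X)) as tau eqn:Etau.
 assert (Htau : 0 < tau) by (subst; apply Rmult_lt_0_compat; auto; apply exp_pos).
 destruct (S_exists eta t v Hv tau Htau) as [Sl [HSnd HS]].
 destruct (nat_for eta t v Hv Het Ht X HX) as [Nx [HNx1 HNx2]].
 rewrite <- EM, <- Etau in HNx2.
 assert (HSlen : (length Sl <= Nx + 4)%nat).
 { apply (counting eta t v Hv Ht tau Nx Sl Htau HNx2 HSnd). intros j Hj. apply HS; auto. }
 destruct (nat_between (X / th)) as [K [HK1 HK2]]. left; apply Rdiv_lt_0_compat; lra.
 set (test := fun k j => if Rlt_dec (tau * exp (ap * INR k)) (Rabs (v j)) then true else false).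
 set (r := fun j => length (filter (fun k => test k j) (seq 0 K))).
 assert (R1 : forall j, Rabs (v j) <= tau * exp (ap * INR (r j))).
 { intro j. destruct (Rle_dec (Rabs (v j)) (tau * exp (ap * INR (r j)))) as [H|H]; auto. exfalso.
   assert (HvM : Rabs (v j) <= M) by (subst M; apply (v_coef eta t v Hv)).
   assert (HKM : M <= tau * exp (ap * INR K)).
   { subst tau. rewrite Rmult_assoc, <- exp_plus. rewrite <- (Rmult_1_r M) at 1.
     apply Rmult_le_compat_l. lra. rewrite <- exp_0. apply exp_mono.
     assert (ap * (X / th) <= ap * INR K) by (apply Rmult_le_compat_l; lra).
     replace (ap * (X / th)) with (eta * X) in H0 by (rewrite <- Hthe; field; lra). lra. }
   assert (Hr : (r j < K)%nat).
   { destruct (Nat.lt_ge_cases (r j) K); auto. exfalso. apply le_INR in H0.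
     assert (exp (ap * INR K) <= exp (ap * INR (r j))) by (apply exp_mono; apply Rmult_le_compat_l; lra).
     assert (tau * exp (ap * INR K) <= tau * exp (ap * INR (r j))) by (apply Rmult_le_compat_l; lra). lra. }
   assert (Hall : (S (r j) <= r j)%nat).
   { unfold r at 2. apply filter_all_len. lia. intros k Hk. unfold test.
     destruct Rlt_dec as [|Hn]; auto. exfalso. apply Hn.
     apply Rle_lt_trans with (tau * exp (ap * INR (r j))); [|lra].
     apply Rmult_le_compat_l; [lra|]. apply exp_mono. apply Rmult_le_compat_l; [lra|].
     apply le_INR. lia. }
   lia. }
 set (Lp := flat_map (fun j => ball (r j) j) Sl).
 assert (Hswap : lsum (fun j => INR (r j)) Sl =
     lsum (fun k => INR (length (filter (fun j => test k j) Sl))) (seq 0 K)).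
 { transitivity (lsum (fun j => lsum (fun k => if test k j then 1 else 0) (seq 0 K)) Sl).
   apply lsum_ext. intros j _. unfold r. apply count_lsum.
   rewrite lsum_swap. apply lsum_ext. intros k _. symmetry. apply count_lsum. }
 assert (Hk : forall k, INR (length (filter (fun j => test k j) Sl)) <= Uk X th (/ t) k + 5).
 { intro k. pose proof (Uk_nonneg X th (/ t) k) as HU.
   assert (Esig : tau * exp (ap * INR k) = M * exp (- eta * Yk X th k)).
   { subst tau. rewrite Rmult_assoc, <- exp_plus. f_equal. f_equal. unfold Yk. rewrite <- Hthe. ring. }
   unfold Uk. destruct (Rlt_dec 0 (Yk X th k)) as [HY|HY].
   - destruct (nat_for eta t v Hv Het Ht _ HY) as [n [Hn1 Hn2]]. rewrite <- EM in Hn2.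
     assert (Hsig : 0 < M * exp (- eta * Yk X th k)) by (apply Rmult_lt_0_compat; auto; apply exp_pos).
     assert (Hl : (length (filter (fun j => test k j) Sl) <= n + 4)%nat).
     { apply (counting eta t v Hv Ht _ n _ Hsig Hn2). apply NoDup_filter; auto.
       intros j Hj. apply filter_In in Hj. destruct Hj as [_ Hj]. unfold test in Hj.
       destruct Rlt_dec; [lra|discriminate]. }
     apply le_INR in Hl. rewrite plus_INR in Hl. simpl in Hl. lra.
   - destruct (filter (fun j => test k j) Sl) as [|x l] eqn:E. simpl; lra.
     exfalso. assert (Hx : In x (filter (fun j => test k j) Sl)) by (rewrite E; left; auto).
     apply filter_In in Hx. destruct Hx as [_ Hx]. unfold test in Hx.
     destruct Rlt_dec as [Hlt|]; [|discriminate].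
     assert (HvM : Rabs (v x) <= M) by (subst M; apply (v_coef eta t v Hv)).
     assert (M <= M * exp (- eta * Yk X th k)).
     { rewrite <- (Rmult_1_r M) at 1. apply Rmult_le_compat_l; [lra|]. rewrite <- exp_0.
       apply exp_mono. nra. }
     lra. }
 assert (Hsum : lsum (fun j => INR (r j)) Sl <= Rpower X (/ t) + Rpower X (1 + / t) / ((1 + / t) * th) + 5 * INR K).
 { rewrite Hswap. eapply Rle_trans. apply (lsum_le _ (fun k => Uk X th (/ t) k + 5)). auto.
   rewrite lsum_plus, lsum_const, length_seq. pose proof (tele_sum X th (/ t) K HX ltac:(lra) ltac:(lra)). lra. }
 assert (HLp : (length Lp <= N')%nat).
 { apply INR_le. unfold Lp. rewrite length_balls.
   rewrite lsum_plus, (lsum_scal 2 (fun j => INR (r j))), lsum_const.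
   apply le_INR in HSlen. rewrite plus_INR in HSlen. simpl in HSlen.
   assert (10 * X / th + 10 >= 10 * INR K).
   { assert (INR K <= X / th + 1) by lra. unfold Rdiv in *. lra. }
   lra. }
 destruct (pad Lp N' HLp) as [L' [HL'nd [HL'l HL'i]]].
 assert (Hser := v_series eta t v Hv).
 destruct (bestN_approx v Nx tau Htau) as [Lam [HLnd [HLl HLt]]].
 assert (HtL : tail_sq v Lam <= 4 * tau ^ 2).
 { assert (Ht0 := tail_sq_nonneg v Lam Hser).
   rewrite <- (sqrt_sqrt (tail_sq v Lam)) by auto.
   pose proof (sqrt_pos (tail_sq v Lam)).
   assert (sqrt (tail_sq v Lam) < 2 * tau) by lra.
   clear -H H0 Htau. set (x := sqrt (tail_sq v Lam)) in *. clearbody x. nra. }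
 set (z1 := fun j => if existsb (Nat.eqb j) Sl then 0 else Rabs (v j)).
 set (z2 := fun j => tau * ind Sl j).
 assert (Hz1 : forall j, 0 <= z1 j). { intro j; unfold z1; destruct existsb; [lra|apply Rabs_pos]. }
 assert (Hz2 : forall j, 0 <= z2 j). { intro j; unfold z2. pose proof (ind_nonneg Sl j). nra. }
 destruct (z_series z1 (mask v Lam) Lam tau HLnd (mask_nonneg v Lam) (mask_ex v Lam Hser)) as [Hz1s Hz1b].
 { intro j. unfold z1. pose proof (ind_nonneg Lam j). pose proof (mask_nonneg v Lam j).
   destruct (existsb (Nat.eqb j) Sl) eqn:Ej. simpl. pose proof (pow2_ge_0 tau). nra.
   assert (Hnj : ~ tau < Rabs (v j)). { intro Hc'. apply HS in Hc'. apply existsb_in in Hc'. congruence. }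
   rewrite pow2_abs. unfold mask, ind. destruct (existsb (Nat.eqb j) Lam).
   rewrite <- (pow2_abs (v j)). assert (Rabs (v j) ^ 2 <= tau ^ 2) by (apply pow_incr; split; [apply Rabs_pos|lra]). lra.
   lra. }
 destruct (z_series z2 (fun _ => 0) Sl tau HSnd (fun _ => Rle_refl 0) (ex_intro _ 0 is_series_zero)) as [Hz2s Hz2b].
 { intro j. unfold z2. pose proof (ind_nonneg Sl j). unfold ind in *. destruct existsb; simpl; lra. }
 rewrite (is_series_unique _ _ is_series_zero) in Hz2b.
 destruct (tail_Av A v Lp (bA c a) (bA c a2) z1 z2 (c * Gc a) (c * Gc a) (c * Gc a2) (c * Gc a2)
   (bA_nonneg c a Hc) Hz1 (bA_row c a Hc Ha) (bA_col c a Hc Ha) Hz1s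
   (bA_nonneg c _ Hc) Hz2 (bA_row c _ Hc Ha2) (bA_col c _ Hc Ha2) Hz2s) as [_ Htail].
 { intros i Hi j. rewrite Rabs_mult. unfold z1, z2, bA, ind.
   destruct (existsb (Nat.eqb j) Sl) eqn:Ej.
   - rewrite Rmult_0_r, Rplus_0_l, Rmult_1_r.
     apply existsb_in in Ej.
     remember (Rabs (INR i - INR j)) as d eqn:Ed.
     assert (Hd : INR (r j) < d).
     { destruct (Rlt_dec (INR (r j)) d); auto. exfalso. apply Hi. unfold Lp. apply in_flat_map.
       exists j. split; auto. apply in_ball. rewrite <- Ed. lra. }
     assert (Hvj : Rabs (v j) <= tau * exp (ap * d)).
     { eapply Rle_trans. apply R1. apply Rmult_le_compat_l. lra. apply exp_mono.
       apply Rmult_le_compat_l; lra. }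
     eapply Rle_trans. apply Rmult_le_compat; [apply Rabs_pos|apply Rabs_pos|apply HA|exact Hvj].
     rewrite <- Ed. replace (c * exp (- a * d) * (tau * exp (ap * d))) with (c * exp (- a2 * d) * tau).
     lra. replace (- a2 * d) with (- a * d + ap * d) by (unfold a2, ap; field). rewrite exp_plus. ring.
   - rewrite Rmult_0_r, Rmult_0_r, Rplus_0_r. apply Rmult_le_compat_r. apply Rabs_pos. apply HA. }
 destruct (bestN_fin (apply_mat A v) N') as [_ [_ Hle]].
 eapply Rle_trans. apply (Hle L' HL'nd HL'l).
 assert (Hmono := tail_sq_mono (apply_mat A v) _ _ (proj1 (Av_full A c a Hc Ha HA v nil Hser)) HL'i).
 set (K1 := c * Gc a) in *. set (K2 := c * Gc a2) in *.
 assert (HNxr : INR Nx + 4 <= Rpower X (/ t) + 5) by lra.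
 apply le_INR in HSlen. rewrite plus_INR in HSlen. simpl in HSlen.
 assert (Hfin : tail_sq (apply_mat A v) L' <= 2 * (K1 ^ 2 + K2 ^ 2) * (Rpower X (/ t) + 5) * tau ^ 2).
 { clearbody K1 K2 z1 z2 Lp r test. rewrite HLl, <- tail_sq_mask in Hz1b.
   assert (Ht2 : 0 <= tau ^ 2) by apply pow2_ge_0.
   assert (S1 : Series (fun j => z1 j ^ 2) <= (Rpower X (/ t) + 5) * tau ^ 2).
   { assert (tau ^ 2 * INR Nx <= tau ^ 2 * (Rpower X (/ t) + 1)) by (apply Rmult_le_compat_l; lra).
     lra. }
   assert (S2 : Series (fun j => z2 j ^ 2) <= (Rpower X (/ t) + 5) * tau ^ 2).
   { assert (INR (length Sl) <= Rpower X (/ t) + 5) by lra.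
     assert (tau ^ 2 * INR (length Sl) <= tau ^ 2 * (Rpower X (/ t) + 5)) by (apply Rmult_le_compat_l; lra).
     lra. }
   assert (0 <= K1 * K1) by nra. assert (0 <= K2 * K2) by nra.
   assert (K1 * K1 * Series (fun j => z1 j ^ 2) <= K1 * K1 * ((Rpower X (/ t) + 5) * tau ^ 2))
     by (apply Rmult_le_compat_l; auto).
   assert (K2 * K2 * Series (fun j => z2 j ^ 2) <= K2 * K2 * ((Rpower X (/ t) + 5) * tau ^ 2))
     by (apply Rmult_le_compat_l; auto).
   nra. }
 assert (0 <= 2 * (K1 ^ 2 + K2 ^ 2) * (Rpower X (/ t) + 5)).
 { pose proof (pow2_ge_0 K1). pose proof (pow2_ge_0 K2). pose proof (Rpower_pos X (/ t)).
   apply Rmult_le_pos; lra. }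
 rewrite <- (sqrt_pow2 tau) by lra. rewrite <- sqrt_mult_alt by auto.
 apply sqrt_le_1_alt. lra.
Qed.
End Core.

Lemma ln_le_minus1 y : 0 < y -> ln y <= y - 1.
Proof. intros Hy. pose proof (exp_ineq1_le (ln y)). rewrite exp_ln in H; auto. lra. Qed.

Lemma B0_bound s b : 0 < s -> 0 < b -> exists B0, 0 <= B0 /\ forall X, 0 < X ->
  sqrt (Rpower X s + 5) * exp (- b * X) <= B0.
Proof.
 intros Hs Hb. set (k := s / (2 * b)).
 assert (Hk : 0 < k) by (unfold k; apply Rdiv_lt_0_compat; lra).
 exists (sqrt 6 * exp (s / 2 * (ln k - 1) + b)). split.
 apply Rmult_le_pos. apply sqrt_pos. left; apply exp_pos.
 intros X HX.
 assert (H1 : Rpower X s + 5 <= 6 * Rpower (1 + X) s).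
 { assert (Rpower X s <= Rpower (1 + X) s) by (apply Rle_Rpower_l; lra).
   assert (1 <= Rpower (1 + X) s) by (apply Rpower_ge_1; lra). lra. }
 assert (H2 : sqrt (Rpower X s + 5) <= sqrt 6 * exp (s / 2 * ln (1 + X))).
 { eapply Rle_trans. apply sqrt_le_1_alt. exact H1. rewrite sqrt_mult_alt by lra.
   apply Rmult_le_compat_l. apply sqrt_pos. right.
   rewrite <- Rpower_sqrt by apply Rpower_pos. rewrite Rpower_mult. unfold Rpower, Rdiv. reflexivity. }
 assert (H3 : s / 2 * ln (1 + X) - b * X <= s / 2 * (ln k - 1) + b).
 { assert (E : ln (1 + X) = ln k + ln ((1 + X) / k)).
   { rewrite <- ln_mult by (try apply Rdiv_lt_0_compat; lra). f_equal. field. lra. }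
   pose proof (ln_le_minus1 ((1 + X) / k) ltac:(apply Rdiv_lt_0_compat; lra)).
   assert (E2 : s / 2 * ((1 + X) / k) = b * (1 + X)) by (unfold k; field; lra).
   rewrite E. assert (s / 2 * ln ((1 + X) / k) <= s / 2 * ((1 + X) / k - 1)) by (apply Rmult_le_compat_l; lra).
   lra. }
 eapply Rle_trans. apply Rmult_le_compat_r. left; apply exp_pos. exact H2.
 rewrite Rmult_assoc, <- exp_plus. apply Rmult_le_compat_l. apply sqrt_pos. apply exp_mono. lra.
Qed.

Lemma Rpower_lt_1 x y : 0 < x < 1 -> 0 < y -> Rpower x y < 1.
Proof. intros Hx Hy. unfold Rpower. rewrite <- exp_0. apply exp_increasing.
 assert (ln x < 0). { rewrite <- ln_1. apply ln_increasing; lra. } nra. Qed.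

Lemma npow_le_n n e : 0 <= e <= 1 -> npow n e <= INR n.
Proof. intros He. destruct n. simpl; lra. rewrite npow_S.
 rewrite <- (Rpower_1 (INR (S n))) at 2 by (apply lt_0_INR; lia).
 apply Rle_Rpower. apply (le_INR 1); lia. lra. Qed.

Theorem case_b (A : nat -> nat -> R) c a eta t :
  0 < c -> 0 < a -> (forall m n, Rabs (A m n) <= c * exp (- a * Rabs (INR m - INR n))) ->
  0 < eta -> 0 < t <= 1 -> eta < a ->
  exists C : R, forall v : nat -> R, in_AG eta t v ->
    in_AG (zeta t * eta) (t / (1 + t)) (apply_mat A v) /\
    real (AG_norm (zeta t * eta) (t / (1 + t)) (apply_mat A v)) <= C * real (AG_norm eta t v).
Proof.
 intros Hc Ha HA Het Ht Hea.
 assert (Hs : 0 < / t) by (apply Rinv_0_lt_compat; lra).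
 assert (Hth : 1 < th a eta).
 { unfold th, ap. apply (Rmult_lt_reg_r eta); auto. unfold Rdiv. rewrite Rmult_assoc, Rinv_l; lra. }
 remember (th a eta) as th0 eqn:Eth.
 remember (/ t) as s eqn:Es.
 remember (t / (1 + t)) as e2 eqn:Ee2.
 set (p := 1 + s).
 assert (Hp : p = (1 + t) / t) by (unfold p; subst s; field; lra).
 assert (He2p : e2 * p = 1) by (rewrite Hp; subst e2; field; lra).
 assert (He2s : e2 * s = / (1 + t)) by (subst e2 s; field; lra).
 assert (He2 : 0 < e2 <= / (1 + t)).
 { subst e2. split. apply Rdiv_lt_0_compat; lra. unfold Rdiv.
   rewrite <- (Rmult_1_l (/ (1 + t))) at 2. apply Rmult_le_compat_r. left; apply Rinv_0_lt_compat; lra. lra. }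
 assert (He1 : / (1 + t) + e2 = 1) by (subst e2; field; lra).
 assert (Hp0 : 0 < p) by (unfold p; lra).
 set (ga := p * (t + th0) / 4).
 assert (Hga : 0 < ga) by (unfold ga; apply Rdiv_lt_0_compat; [apply Rmult_lt_0_compat|]; lra).
 set (la := (t + th0) / (2 * th0)).
 assert (Hla : 0 < la < 1).
 { unfold la. split. apply Rdiv_lt_0_compat; lra.
   apply (Rmult_lt_reg_r (2 * th0)). lra. unfold Rdiv. rewrite Rmult_assoc, Rinv_l; lra. }
 assert (Hlaga : la = 2 * ga / (p * th0)) by (unfold la, ga; field; lra).
 set (B1 := 28 * ga / (1 - la)).
 assert (HB1 : 0 < B1) by (unfold B1; apply Rdiv_lt_0_compat; lra).
 set (kap := Rpower ((1 + t) / (2 * ga)) e2).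
 assert (Hkap : kap < 1).
 { unfold kap. apply Rpower_lt_1; [|lra]. split. apply Rdiv_lt_0_compat; lra.
   assert (E : 2 * ga - (1 + t) = (1 + t) * (th0 - t) / (2 * t)) by (unfold ga; rewrite Hp; field; lra).
   assert (0 < (1 + t) * (th0 - t) / (2 * t)) by (apply Rdiv_lt_0_compat; [apply Rmult_lt_0_compat|]; lra).
   apply (Rmult_lt_reg_r (2 * ga)); [lra|]. unfold Rdiv. rewrite Rmult_assoc, Rinv_l, Rmult_1_r, Rmult_1_l by lra. lra. }
 set (K1 := c * Gc a). set (K2 := c * Gc (a2 a eta)).
 set (D := 2 * (K1 ^ 2 + K2 ^ 2)).
 assert (HD : 0 <= D) by (unfold D; pose proof (pow2_ge_0 K1); pose proof (pow2_ge_0 K2); lra).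
 destruct (B0_bound s ((1 - kap) * eta) Hs ltac:(apply Rmult_lt_0_compat; lra)) as [B0 [HB0 HB0b]].
 destruct (nat_between ((1 + Rpower B1 p) / ga)) as [N0 [HN0 _]].
 { left. apply Rdiv_lt_0_compat; auto. pose proof (Rpower_pos B1 p). lra. }
 assert (HK1 : 0 < K1). { unfold K1, Gc. apply Rmult_lt_0_compat; auto. apply geo_const_pos; auto. }
 assert (Hze : 0 < zeta t * eta) by (apply Rmult_lt_0_compat; auto; apply Rpower_pos).
 exists (sqrt 2 * K1 * exp (zeta t * eta * INR N0) + sqrt D * B0).
 intros v Hv.
 assert (Hser := v_series eta t v Hv).
 assert (HMn := v_M_nonneg eta t v Hv).
 assert (HvM := v_norm eta t v Hv).
 assert (G1 : forall N', real (bestN (apply_mat A v) N') <= sqrt 2 * K1 * real (AG_norm eta t v)).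
 { intro N'. destruct (bestN_fin (apply_mat A v) N') as [_ [_ Hle]].
   eapply Rle_trans. apply (Hle (seq 0 N')). apply seq_NoDup. apply length_seq.
   destruct (Av_full A c a Hc Ha HA v (seq 0 N') Hser) as [_ Hf]. fold K1 in Hf.
   rewrite <- (sqrt_pow2 K1) by lra. rewrite <- (sqrt_pow2 (real (AG_norm eta t v))) by auto.
   rewrite <- !sqrt_mult_alt. apply sqrt_le_1_alt.
   - assert (K1 * K1 * Series (fun j => v j ^ 2) <= K1 * K1 * real (AG_norm eta t v) ^ 2)
       by (apply Rmult_le_compat_l; [nra|auto]).
     replace (2 * K1 ^ 2 * real (AG_norm eta t v) ^ 2) with (2 * (K1 * K1 * real (AG_norm eta t v) ^ 2)) by ring.
     lra.
   - pose proof (pow2_ge_0 K1). lra.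
   - lra. }
 set (M := real (AG_norm eta t v)) in *.
 assert (EM : M = real (AG_norm eta t v)) by reflexivity. clearbody M.
 set (C := sqrt 2 * K1 * exp (zeta t * eta * INR N0) + sqrt D * B0).
 assert (HC1 : sqrt 2 * K1 * exp (zeta t * eta * INR N0) * M <= C * M).
 { unfold C. assert (0 <= sqrt D * B0 * M) by (apply Rmult_le_pos; auto; apply Rmult_le_pos; auto; apply sqrt_pos). nra. }
 assert (HC2 : sqrt D * B0 * M <= C * M).
 { unfold C. assert (0 <= sqrt 2 * K1 * exp (zeta t * eta * INR N0) * M).
   { apply Rmult_le_pos; auto. apply Rmult_le_pos. apply Rmult_le_pos. apply sqrt_pos. lra. left; apply exp_pos. }
   nra. }
 clearbody C.
 assert (Hmain : forall N', real (bestN (apply_mat A v) N') * exp (zeta t * eta * npow N' e2) <= C * M).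
 { intro N'. destruct (bestN_fin (apply_mat A v) N') as [_ [Hb0 _]].
   pose proof (G1 N') as HG.
   destruct (Req_dec M 0) as [HM0|HM0].
   { rewrite HM0 in HG |- *. assert (real (bestN (apply_mat A v) N') = 0) by nra. rewrite H. lra. }
   assert (HMp : 0 < M) by lra.
   destruct (Nat.lt_ge_cases N' N0) as [HN|HN].
   - eapply Rle_trans; [|exact HC1].
     replace (sqrt 2 * K1 * exp (zeta t * eta * INR N0) * M) with (sqrt 2 * K1 * M * exp (zeta t * eta * INR N0)) by ring.
     apply Rmult_le_compat; auto. left; apply exp_pos. apply exp_mono. apply Rmult_le_compat_l. lra.
     eapply Rle_trans. apply npow_le_n. split; lra. apply le_INR; lia.
   - assert (Ep : p = 1 + s) by reflexivity. assert (EB1 : B1 = 28*ga/(1-la)) by reflexivity.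
     assert (Ekap : kap = Rpower ((1+t)/(2*ga)) e2) by reflexivity.
     assert (EK1: K1 = c*Gc a) by reflexivity. assert (EK2 : K2 = c * Gc (a2 a eta)) by reflexivity.
     assert (ED : D = 2*(K1^2+K2^2)) by reflexivity.
     clearbody p ga la B1 kap K1 K2 D.
     assert (HN0p : (1 + Rpower B1 p) / ga <= INR N') by (apply le_INR in HN; lra).
     assert (HN1 : (1 <= N')%nat).
     { apply INR_le. simpl. assert (0 < (1 + Rpower B1 p) / ga) by (apply Rdiv_lt_0_compat; auto; pose proof (Rpower_pos B1 p); lra).
       assert (0 < INR N') by lra. destruct N'. simpl in H0; lra. rewrite S_INR. pose proof (pos_INR N'). lra. }
     remember (ga * INR N') as u eqn:Eu.
     assert (Hu : 1 + Rpower B1 p <= u).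
     { subst u. replace (1 + Rpower B1 p) with (ga * ((1 + Rpower B1 p) / ga)) by (field; lra).
       apply Rmult_le_compat_l; lra. }
     assert (Hup : 0 < u) by (pose proof (Rpower_pos B1 p); lra).
     assert (Hu1 : 1 <= u) by (pose proof (Rpower_pos B1 p); lra).
     remember (Rpower u e2) as X eqn:EX.
     assert (HX : 0 < X) by (subst X; apply Rpower_pos).
     remember (Rpower u (/ (1 + t))) as U eqn:EU.
     assert (F1 : Rpower X s = U) by (subst X U; rewrite Rpower_mult, He2s; reflexivity).
     assert (F2 : Rpower X p = u) by (subst X; rewrite Rpower_mult, He2p; apply Rpower_1; auto).
     assert (F3 : X <= U). { subst X U. apply Rle_Rpower. pose proof (Rpower_pos B1 p). lra. lra. }
     assert (F4 : 1 <= U) by (subst U; apply Rpower_ge_1; [lra|left; apply Rinv_0_lt_compat; lra]).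
     assert (F5 : u = U * X).
     { subst X U. rewrite <- Rpower_plus, He1. rewrite Rpower_1; auto. }
     assert (F6 : B1 <= X).
     { subst X. replace B1 with (Rpower (Rpower B1 p) e2).
       apply Rle_Rpower_l. lra. split. apply Rpower_pos. lra.
       rewrite Rpower_mult. rewrite Rmult_comm, He2p. apply Rpower_1; auto. }
     assert (Hcnt : 3 * Rpower X s + 2 * Rpower X (1 + s) / ((1 + s) * th0) + 10 * X / th0 + 15 <= INR N').
     { rewrite <- Ep. rewrite F1, F2.
       assert (E1 : 2 * u / (p * th0) = la * INR N') by (rewrite Hlaga, Eu; field; lra).
       assert (E2 : 10 * X / th0 <= 10 * U).
       { apply (Rmult_le_reg_r th0). lra. unfold Rdiv. rewrite Rmult_assoc, Rinv_l by lra. nra. }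
       assert (E3 : (1 - la) * INR N' >= 28 * U).
       { assert (INR N' = U * X / ga) by (rewrite <- F5, Eu; field; lra).
         rewrite H. rewrite EB1 in F6.
         assert (28 * ga <= (1 - la) * X).
         { replace (28 * ga) with ((1 - la) * (28 * ga / (1 - la))) by (field; lra).
           apply Rmult_le_compat_l; lra. }
         apply Rle_ge. apply (Rmult_le_reg_r ga); auto. unfold Rdiv.
         replace ((1 - la) * (U * X * / ga) * ga) with (U * ((1 - la) * X)) by (field; lra).
         replace (28 * U * ga) with (U * (28 * ga)) by ring.
         apply Rmult_le_compat_l; lra. }
       lra. }
     rewrite Es, Eth in Hcnt.
     pose proof (core_b A c a eta t v Hc Ha HA Het Hea Ht Hv X N' HX ltac:(rewrite <- EM; exact HMp) Hcnt) as Hcore.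
     rewrite <- Es, <- EM in Hcore. rewrite <- EK1, <- EK2, <- ED in Hcore. rewrite F1 in Hcore.
     assert (Hexp : zeta t * eta * npow N' e2 = eta * kap * X).
     { destruct N' as [|N'']; [lia|]. rewrite npow_S. unfold zeta. rewrite <- Ee2.
       rewrite (Rmult_comm (Rpower _ e2) eta), Rmult_assoc, Rpower_mult_distr; [|lra|apply lt_0_INR; lia].
       rewrite Rmult_assoc. f_equal. rewrite Ekap, EX, Rpower_mult_distr; [|apply Rdiv_lt_0_compat; lra|auto].
       f_equal. rewrite Eu. field. lra. }
     rewrite Hexp.
     rewrite <- F1 in Hcore.
     assert (Hsq : sqrt (D * (Rpower X s + 5)) = sqrt D * sqrt (Rpower X s + 5)) by (apply sqrt_mult_alt; auto).
     rewrite Hsq in Hcore.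
     eapply Rle_trans; [|exact HC2].
     eapply Rle_trans. apply Rmult_le_compat_r. left; apply exp_pos. exact Hcore.
     replace (sqrt D * sqrt (Rpower X s + 5) * (M * exp (- eta * X)) * exp (eta * kap * X))
       with (sqrt D * M * (sqrt (Rpower X s + 5) * exp (- ((1 - kap) * eta) * X)))
       by (replace (- ((1 - kap) * eta) * X) with (- eta * X + eta * kap * X) by ring; rewrite exp_plus; ring).
     replace (sqrt D * B0 * M) with (sqrt D * M * B0) by ring.
     apply Rmult_le_compat_l. apply Rmult_le_pos; [apply sqrt_pos|lra]. apply HB0b; auto. }
 destruct (AG_bound _ _ _ _ Hmain) as [Hf Hle].
 split; [split|]; auto.
 eapply ex_series_ext; [|apply (proj1 (Av_full A c a Hc Ha HA v nil Hser))]. intro; reflexivity.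
Qed.


Theorem mainTheorem6 :
  forall (nu sigma : R -> R) (nu_lo nu_hi sigma_hi : R),
    smooth nu -> smooth sigma ->
    0 < nu_lo ->
    (forall x, -1 <= x <= 1 -> nu_lo <= nu x <= nu_hi) ->
    (forall x, -1 <= x <= 1 -> 0 <= sigma x <= sigma_hi) ->
  forall etaL : R, 0 < etaL -> in_De etaL (stiff nu sigma) ->
  forall eta t : R, 0 < eta -> 0 < t <= 1 ->
    (* case (a): banded *)
    (forall p : nat, banded p (stiff nu sigma) ->
       exists C : R, forall v : nat -> R, in_AG eta t v ->
         in_AG (eta / Rpower (2 * INR p + 1) t) t (apply_mat (stiff nu sigma) v) /\
         real (AG_norm (eta / Rpower (2 * INR p + 1) t) t (apply_mat (stiff nu sigma) v))
           <= C * real (AG_norm eta t v))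
    /\
    (* case (b): dense, eta < etaL *)
    (eta < etaL ->
       exists C : R, forall v : nat -> R, in_AG eta t v ->
         in_AG (zeta t * eta) (t / (1 + t)) (apply_mat (stiff nu sigma) v) /\
         real (AG_norm (zeta t * eta) (t / (1 + t)) (apply_mat (stiff nu sigma) v))
           <= C * real (AG_norm eta t v)).
Proof.
 intros nu sigma nu_lo nu_hi sigma_hi _ _ _ _ _ etaL HetaL HDe eta t Heta Ht.
 destruct HDe as [cL [HcL HA]]. split.
 - intros p Hb. exact (case_a (stiff nu sigma) cL etaL p eta t HcL HetaL HA Hb Heta Ht).
 - intros Hlt. exact (case_b (stiff nu sigma) cL etaL eta t HcL HetaL HA Heta Ht Hlt).
Qed.
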